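(* For every $X$ in $\mathsf{SquaMS}$, $M\otimes C(X)\cong C(M\otimes X)$ and $N\otimes C(X)\cong C(N\otimes X)$ (isomorphisms in $\mathsf{SquaMS}$, natural in $X$, given by $m\otimes(x_k)_k\mapsto(m\otimes x_k)_k$).
   Context: Let $M_0=\{(r,s)\in[0,1]^2: r\in\{0,1\}\text{ or } s\in\{0,1\}\}$. A square metric space is a pair $(X,S_X)$ with $X$ a metric space with all distances at most $2$ and $S_X\colon M_0\to X$ injective such that (sq1) for $i\in\{0,1\}$, $r,s\in[0,1]$: $d_X(S_X(i,r),S_X(i,s))=|s-r|$ and $d_X(S_X(r,i),S_X(s,i))=|s-r|$; (sq2) $d_X(S_X(r,s),S_X(t,u))\ge|r-t|+|s-u|$. $\mathsf{SquaMS}$: these objects, with short maps $f$ satisfying $f\circ S_X=S_Y$ as morphisms. Let $N=\{0,1,2\}^2$, $M=N\setminus\{(1,1)\}$, also viewed as points of $\mathbb{R}^2$. For $P\in\{M,N\}$ and $X$ in $\mathsf{SquaMS}$, $P\otimes X=(P\times X)/\!\sim$, where $\sim$ is generated by $(m,S_X(p))\sim(n,S_X(q))$ whenever $m,n\in P$ differ by exactly $1$ in exactly one coordinate and $(m+p)/3=(n+q)/3$; $m\otimes x$ is the class of $(m,x)$; the metric is the quotient of $d((a,u),(b,v))=\frac13 d_X(u,v)$ if $a=b$, $2$ otherwise (infimum over finite chains, $\sim$-related consecutive pairs counting $0$); $S_{P\otimes X}(p)=m\otimes S_X(3p-m)$ for any $m\in P$ with $p\in(m+[0,1]^2)/3$;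 $(P\otimes f)(m\otimes x)=m\otimes f(x)$. The Cauchy completion $C(X)$ consists of Cauchy sequences modulo $d_X(x_i,y_i)\to0$, with $d((x_i),(y_i))=\lim d_X(x_i,y_i)$ and $S_{C(X)}(p)$ the class of the constant sequence $S_X(p)$; $C(f)((x_i))=(f(x_i))$. *)

(* Defs.v *)
From Stdlib Require Import Reals Lra List Relations ClassicalEpsilon.
Open Scope R_scope.
Set Implicit Arguments.

Definition is_glb_R (E : R -> Prop) (m : R) : Prop :=
  (forall x, E x -> m <= x) /\ (forall y, (forall x, E x -> y <= x) -> y <= m).

(* the infimum of E (meaningful when E is nonempty and bounded below) *)
Definition Rinf (E : R -> Prop) : R := epsilon (inhabits 0) (is_glb_R E).

Definition Rchoose (P : R -> Prop) : R := epsilon (inhabits 0) P.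

Definition I01 (r : R) : Prop := 0 <= r <= 1.
Definition inM0 (p : R * R) : Prop :=
  I01 (fst p) /\ I01 (snd p) /\
  (fst p = 0 \/ fst p = 1 \/ snd p = 0 \/ snd p = 1).
Definition M0 := {p : R * R | inM0 p}.

Lemma inM0_00 : inM0 (0, 0).
Proof. unfold inM0, I01; simpl; repeat split; lra. Qed.
Definition m00 : M0 := exist _ (0, 0) inM0_00.

Record SqData := {
  sq_car :> Type;
  sd : sq_car -> sq_car -> R;
  sS : M0 -> sq_car
}.

Definition isSquaMS (X : SqData) : Prop :=
  (forall x y : X, 0 <= sd X x y) /\
  (forall x y : X, sd X x y = 0 <-> x = y) /\
  (forall x y : X, sd X x y = sd X y x) /\
  (forall x y z : X, sd X x z <= sd X x y + sd X y z) /\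
  (forall x y : X, sd X x y <= 2) /\
  (forall p q : M0, sS X p = sS X q -> p = q) /\
  (* (sq1), first coordinate fixed to i in {0,1} *)
  (forall p q : M0, fst (proj1_sig p) = fst (proj1_sig q) ->
     (fst (proj1_sig p) = 0 \/ fst (proj1_sig p) = 1) ->
     sd X (sS X p) (sS X q) = Rabs (snd (proj1_sig q) - snd (proj1_sig p))) /\
  (* (sq1), second coordinate fixed to i in {0,1} *)
  (forall p q : M0, snd (proj1_sig p) = snd (proj1_sig q) ->
     (snd (proj1_sig p) = 0 \/ snd (proj1_sig p) = 1) ->
     sd X (sS X p) (sS X q) = Rabs (fst (proj1_sig q) - fst (proj1_sig p))) /\
  (* (sq2) *)
  (forall p q : M0,
     Rabs (fst (proj1_sig p) - fst (proj1_sig q)) +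
     Rabs (snd (proj1_sig p) - snd (proj1_sig q)) <= sd X (sS X p) (sS X q)).

Lemma isSquaMS_nonneg (X : SqData) : isSquaMS X -> forall x y : X, 0 <= sd X x y.
Proof. intros H; apply H. Qed.

Lemma isSquaMS_refl (X : SqData) : isSquaMS X -> forall x : X, sd X x x = 0.
Proof. intros H x; destruct H as [_ [H _]]; apply H; reflexivity. Qed.

Definition short (X Y : SqData) (f : X -> Y) : Prop :=
  forall a b : X, sd Y (f a) (f b) <= sd X a b.
Definition morph (X Y : SqData) (f : X -> Y) : Prop :=
  short X Y f /\ forall p : M0, f (sS X p) = sS Y p.

Definition sq_iso (X Y : SqData) (f : X -> Y) : Prop :=
  isSquaMS X /\ isSquaMS Y /\ morph X Y f /\
  exists g : Y -> X, morph Y X g /\ (forall x, g (f x) = x) /\ (forall y, f (g y) = y).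

Inductive shape := ShM | ShN.

Definition inP (sh : shape) (m : nat * nat) : Prop :=
  (fst m <= 2)%nat /\ (snd m <= 2)%nat /\ (sh = ShM -> m <> (1%nat, 1%nat)).
Definition Pel (sh : shape) := {m : nat * nat | inP sh m}.

Lemma inP_00 (sh : shape) : inP sh (0%nat, 0%nat).
Proof. unfold inP; simpl; repeat split; try (intros; discriminate); auto with arith. Qed.
Definition pel00 (sh : shape) : Pel sh := exist _ (0%nat, 0%nat) (inP_00 sh).

Definition adjacent (m n : nat * nat) : Prop :=
  ((fst m = S (fst n) \/ fst n = S (fst m)) /\ snd m = snd n) \/
  (fst m = fst n /\ (snd m = S (snd n) \/ snd n = S (snd m))).

Definition scl (m : nat * nat) (p : R * R) : R * R :=
  ((INR (fst m) + fst p) / 3, (INR (snd m) + snd p) / 3).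

Section Tensor.
Variables (sh : shape) (X : SqData).

Definition TE := (Pel sh * X)%type.

Definition tgen (a b : TE) : Prop :=
  exists p q : M0, snd a = sS X p /\ snd b = sS X q /\
    adjacent (proj1_sig (fst a)) (proj1_sig (fst b)) /\
    scl (proj1_sig (fst a)) (proj1_sig p) = scl (proj1_sig (fst b)) (proj1_sig q).

Definition tsim : relation TE := clos_refl_sym_trans TE tgen.

Definition tcar := {A : TE -> Prop | exists a, A = tsim a}.
Definition tcls (a : TE) : tcar := exist _ (tsim a) (ex_intro _ a eq_refl).

Definition bd (a b : TE) : R :=
  let m := proj1_sig (fst a) in let n := proj1_sig (fst b) in
  if (Nat.eqb (fst m) (fst n) && Nat.eqb (snd m) (snd n))%bool
  then sd X (snd a) (snd b) / 3 else 2.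

Fixpoint chain_ok (a : TE) (l : list (TE * TE)) (b : TE) : Prop :=
  match l with
  | nil => tsim a b
  | (p, q) :: l' => tsim a p /\ chain_ok q l' b
  end.
Fixpoint chain_cost (l : list (TE * TE)) : R :=
  match l with
  | nil => 0
  | (p, q) :: l' => bd p q + chain_cost l'
  end.

Definition tdist (A B : tcar) : R :=
  Rinf (fun r => exists a b l, proj1_sig A a /\ proj1_sig B b /\
                               chain_ok a l b /\ r = chain_cost l).

Definition inhPM : inhabited (Pel sh * M0) := inhabits (pel00 sh, m00).

(* S_{P (x) X}(p) = m (x) S_X(3p - m) for some m in P with p = (m + q)/3, q in M0 *)
Definition tS (p : M0) : tcar :=
  let mq := epsilon inhPM
              (fun mq : Pel sh * M0 =>
                 scl (proj1_sig (fst mq)) (proj1_sig (snd mq)) = proj1_sig p) in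
  tcls (fst mq, sS X (snd mq)).

Definition TD : SqData := {| sq_car := tcar; sd := tdist; sS := tS |}.

End Tensor.

Arguments tcls {sh X} a.

Definition tensmap (sh : shape) (X Y : SqData) (f : X -> Y) (A : tcar sh X) : tcar sh Y :=
  let a := epsilon (inhabits (pel00 sh, sS X m00)) (fun a => proj1_sig A a) in
  tcls (fst a, f (snd a)).

Section Completion.
Variable X : SqData.

Definition Cauchy (s : nat -> X) : Prop :=
  forall eps, 0 < eps -> exists N : nat, forall n m : nat,
    (N <= n)%nat -> (N <= m)%nat -> sd X (s n) (s m) < eps.

Definition cequiv (s t : nat -> X) : Prop :=
  Un_cv (fun n => sd X (s n) (t n)) 0.

Definition cclass (s : nat -> X) : (nat -> X) -> Prop :=
  fun t => Cauchy t /\ cequiv s t.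

Definition ccar := {A : (nat -> X) -> Prop | exists s, Cauchy s /\ A = cclass s}.

Definition cdist (A B : ccar) : R :=
  Rchoose (fun r => exists s t, proj1_sig A s /\ proj1_sig B t /\
                                Un_cv (fun n => sd X (s n) (t n)) r).

Lemma const_Cauchy (H : forall x : X, sd X x x = 0) (x : X) : Cauchy (fun _ => x).
Proof. intros eps Heps; exists 0%nat; intros; rewrite H; exact Heps. Qed.

Definition cS (H : forall x : X, sd X x x = 0) (p : M0) : ccar :=
  exist _ (cclass (fun _ => sS X p))
        (ex_intro _ (fun _ => sS X p) (conj (const_Cauchy H (sS X p)) eq_refl)).

Definition CD (H : forall x : X, sd X x x = 0) : SqData :=
  {| sq_car := ccar; sd := cdist; sS := cS H |}.

End Completion.

(* y = C(g)(x): g maps every representative of x into y *)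
Definition Crel (X Y : SqData) (g : X -> Y) (x : ccar X) (y : ccar Y) : Prop :=
  forall s, proj1_sig x s -> proj1_sig y (fun k => g (s k)).

Lemma tdist_refl (sh : shape) (X : SqData) :
  (forall x y : X, 0 <= sd X x y) -> forall A : tcar sh X, tdist A A = 0.
Proof.
  intros Hnn A.
  set (E := fun r => exists a b l, proj1_sig A a /\ proj1_sig A b /\
                                   @chain_ok sh X a l b /\ r = @chain_cost sh X l).
  assert (Hc : forall l, 0 <= @chain_cost sh X l).
  { induction l as [|[p q] l IH]; simpl; [lra|].
    assert (0 <= @bd sh X p q).
    { unfold bd; destruct (_ && _)%bool; [specialize (Hnn (snd p) (snd q)); lra | lra]. }
    lra. }
  assert (HE : E 0).
  { destruct A as [A [a0 ->]]. exists a0, a0, nil; simpl.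
    repeat split; apply rst_refl. }
  assert (Hlb : forall x, E x -> 0 <= x).
  { intros x [a [b [l [_ [_ [_ ->]]]]]]; apply Hc. }
  unfold tdist. fold E. unfold Rinf.
  assert (Hg : is_glb_R E 0).
  { split; [exact Hlb | intros y Hy; apply Hy; exact HE]. }
  destruct (epsilon_spec (inhabits 0) (is_glb_R E) (ex_intro _ 0 Hg)) as [H1 H2].
  apply Rle_antisym; [apply H1; exact HE | apply H2; exact Hlb].
Qed.

Arguments morph : clear implicits.
Arguments sq_iso : clear implicits.
Arguments Crel : clear implicits.
Arguments tensmap : clear implicits.
Arguments short : clear implicits.

(* Main.v *)
Require Import Defs.
From Stdlib Require Import Reals Lra Lia List Relations ClassicalEpsilon Classical FunctionalExtensionality PropExtensionality ProofIrrelevance.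
Open Scope R_scope.
Import ListNotations.


Lemma sig_eq {A : Type} {P : A -> Prop} (x y : {a : A | P a}) :
  proj1_sig x = proj1_sig y -> x = y.
Proof. destruct x as [x Hx], y as [y Hy]; simpl; intros ->; f_equal; apply proof_irrelevance. Qed.

Lemma le_eps (x y : R) : (forall e, 0 < e -> x <= y + e) -> x <= y.
Proof.
  intros H. destruct (Rle_or_lt x y) as [h|h]; auto.
  assert (h2 : 0 < (x - y) / 2) by lra. specialize (H _ h2). lra.
Qed.

Lemma Rinf_spec (E : R -> Prop) :
  (exists x, E x) -> (forall x, E x -> 0 <= x) -> is_glb_R E (Rinf E).
Proof.
  intros [x0 Hx0] Hlb.
  assert (Hex: exists m, is_glb_R E m).
  { destruct (completeness (fun y => E (- y))) as [M [HM1 HM2]].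
    - exists 0. intros y Hy. specialize (Hlb _ Hy). lra.
    - exists (- x0). rewrite Ropp_involutive. exact Hx0.
    - exists (- M). split.
      + intros x Hx. specialize (HM1 (- x)).
        assert (E (- - x)) by (rewrite Ropp_involutive; exact Hx).
        specialize (HM1 H). lra.
      + intros y Hy. assert (M <= - y).
        { apply HM2. intros z Hz. specialize (Hy _ Hz). lra. } lra. }
  unfold Rinf. apply epsilon_spec. exact Hex.
Qed.

Definition L1 (a b : R * R) : R := Rabs (fst a - fst b) + Rabs (snd a - snd b).

Lemma L1_tri a b c : L1 a c <= L1 a b + L1 b c.
Proof.
  unfold L1.
  pose proof (Rabs_triang (fst a - fst b) (fst b - fst c)).
  pose proof (Rabs_triang (snd a - snd b) (snd b - snd c)).
  replace (fst a - fst b + (fst b - fst c)) with (fst a - fst c) in * by ring.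
  replace (snd a - snd b + (snd b - snd c)) with (snd a - snd c) in * by ring.
  lra.
Qed.

Lemma L1_sym a b : L1 a b = L1 b a.
Proof. unfold L1. rewrite (Rabs_minus_sym (fst a)), (Rabs_minus_sym (snd a)). ring. Qed.

Lemma L1_nn a b : 0 <= L1 a b.
Proof. unfold L1. pose proof (Rabs_pos (fst a - fst b)). pose proof (Rabs_pos (snd a - snd b)). lra. Qed.

Lemma L1_refl a : L1 a a = 0.
Proof. unfold L1. rewrite !Rminus_diag, Rabs_R0. ring. Qed.

Lemma Rabs_div3 x y : Rabs (x / 3 - y / 3) = Rabs (x - y) / 3.
Proof.
  replace (x / 3 - y / 3) with ((x - y) * / 3) by field.
  rewrite Rabs_mult, (Rabs_right (/ 3)) by lra. unfold Rdiv. ring.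
Qed.

Lemma L1_scl (m : nat * nat) a b : L1 (scl m a) (scl m b) = L1 a b / 3.
Proof.
  unfold L1, scl; simpl. rewrite !Rabs_div3.
  replace (INR (fst m) + fst a - (INR (fst m) + fst b)) with (fst a - fst b) by ring.
  replace (INR (snd m) + snd a - (INR (snd m) + snd b)) with (snd a - snd b) by ring.
  field.
Qed.

Lemma M0_eq (p q : M0) : fst (proj1_sig p) = fst (proj1_sig q) ->
  snd (proj1_sig p) = snd (proj1_sig q) -> p = q.
Proof.
  destruct p as [[a b] hp], q as [[c e] hq]; simpl; intros h1 h2.
  apply sig_eq; simpl; subst; auto.
Qed.

Lemma M0_bounds (p : M0) : 0 <= fst (proj1_sig p) <= 1 /\ 0 <= snd (proj1_sig p) <= 1.
Proof. destruct p as [pp hp]; simpl; destruct hp as [h1 [h2 _]]. unfold I01 in *. tauto. Qed.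

Lemma M0_L1_le2 (p q : M0) : L1 (proj1_sig p) (proj1_sig q) <= 2.
Proof.
  destruct (M0_bounds p), (M0_bounds q). unfold L1.
  unfold Rabs; repeat destruct Rcase_abs; lra.
Qed.

Section SQ.
Context {X : SqData} (HX : isSquaMS X).

Lemma d_nn x y : 0 <= sd X x y.
Proof. destruct HX as (h&_); apply h. Qed.
Lemma d_eq0 x y : sd X x y = 0 -> x = y.
Proof. destruct HX as (_&h&_); apply h. Qed.
Lemma d_refl x : sd X x x = 0.
Proof. destruct HX as (_&h&_); apply h; reflexivity. Qed.
Lemma d_sym x y : sd X x y = sd X y x.
Proof. destruct HX as (_&_&h&_); apply h. Qed.
Lemma d_tri x y z : sd X x z <= sd X x y + sd X y z.
Proof. destruct HX as (_&_&_&h&_); apply h. Qed.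
Lemma d_le2 x y : sd X x y <= 2.
Proof. destruct HX as (_&_&_&_&h&_); apply h. Qed.
Lemma S_inj p q : sS X p = sS X q -> p = q.
Proof. destruct HX as (_&_&_&_&_&h&_); apply h. Qed.
Lemma sq1a (p q : M0) : fst (proj1_sig p) = fst (proj1_sig q) ->
  (fst (proj1_sig p) = 0 \/ fst (proj1_sig p) = 1) ->
  sd X (sS X p) (sS X q) = Rabs (snd (proj1_sig q) - snd (proj1_sig p)).
Proof. destruct HX as (_&_&_&_&_&_&h&_); apply h. Qed.
Lemma sq1b (p q : M0) : snd (proj1_sig p) = snd (proj1_sig q) ->
  (snd (proj1_sig p) = 0 \/ snd (proj1_sig p) = 1) ->
  sd X (sS X p) (sS X q) = Rabs (fst (proj1_sig q) - fst (proj1_sig p)).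
Proof. destruct HX as (_&_&_&_&_&_&_&h&_); apply h. Qed.
Lemma sq2 (p q : M0) : L1 (proj1_sig p) (proj1_sig q) <= sd X (sS X p) (sS X q).
Proof. destruct HX as (_&_&_&_&_&_&_&_&h); apply h. Qed.

End SQ.


Lemma Pel_eq sh (m n : Pel sh) : proj1_sig m = proj1_sig n -> m = n.
Proof. apply sig_eq. Qed.

Section Tens.
Context {sh : shape} {X : SqData} (HX : isSquaMS X).

Notation E := (TE sh X).

Lemma bd_case (a b : E) :
  (fst a = fst b /\ bd a b = sd X (snd a) (snd b) / 3) \/ (fst a <> fst b /\ bd a b = 2).
Proof.
  destruct a as [m u], b as [n v]; unfold bd; simpl.
  destruct (Nat.eqb (fst (proj1_sig m)) (fst (proj1_sig n))) eqn:E1;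
  destruct (Nat.eqb (snd (proj1_sig m)) (snd (proj1_sig n))) eqn:E2; simpl.
  - left. split; auto. apply Pel_eq. apply Nat.eqb_eq in E1, E2.
    apply injective_projections; auto.
  - right. split; auto. intros ->. rewrite Nat.eqb_refl in E2. discriminate.
  - right. split; auto. intros ->. rewrite Nat.eqb_refl in E1. discriminate.
  - right. split; auto. intros ->. rewrite Nat.eqb_refl in E1. discriminate.
Qed.

Lemma bd_nn (a b : E) : 0 <= bd a b.
Proof. destruct (bd_case a b) as [[_ h]|[_ h]]; rewrite h; [pose proof (d_nn HX (snd a) (snd b)); lra | lra]. Qed.

Lemma bd_le2 (a b : E) : bd a b <= 2.
Proof. destruct (bd_case a b) as [[_ h]|[_ h]]; rewrite h; [pose proof (d_le2 HX (snd a) (snd b)); lra | lra]. Qed.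

Lemma bd_refl (a : E) : bd a a = 0.
Proof. destruct (bd_case a a) as [[_ h]|[h _]]; [rewrite h, (d_refl HX); lra | congruence]. Qed.

Lemma bd_sym (a b : E) : bd a b = bd b a.
Proof.
  destruct (bd_case a b) as [[e1 h1]|[n1 h1]]; destruct (bd_case b a) as [[e2 h2]|[n2 h2]];
  rewrite h1, h2; try congruence. rewrite (d_sym HX). reflexivity.
Qed.

Lemma bd_tri (a b c : E) : bd a c <= bd a b + bd b c.
Proof.
  pose proof (bd_le2 a c). pose proof (bd_nn a b). pose proof (bd_nn b c).
  destruct (bd_case a b) as [[e1 h1]|[_ h1]]; [|lra].
  destruct (bd_case b c) as [[e2 h2]|[_ h2]]; [|lra].
  destruct (bd_case a c) as [[e3 h3]|[n3 h3]]; [|exfalso; congruence].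
  rewrite h1, h2, h3. pose proof (d_tri HX (snd a) (snd b) (snd c)). lra.
Qed.

Definition glued_eq (e e' : E) : Prop :=
  exists q q', snd e = sS X q /\ snd e' = sS X q' /\
    scl (proj1_sig (fst e)) (proj1_sig q) = scl (proj1_sig (fst e')) (proj1_sig q').

Lemma tsim_inv {e e' : E} : tsim e e' -> e = e' \/ glued_eq e e'.
Proof.
  intros H; induction H as [x y Hg| x | x y _ IH | x y z _ IH1 _ IH2].
  - right. destruct Hg as (p&q&h1&h2&_&h3). exists p, q; auto.
  - left; auto.
  - destruct IH as [<-|(q&q'&h1&h2&h3)]; [left; auto| right; exists q', q; auto].
  - destruct IH1 as [<-|(q1&q1'&h1&h2&h3)]; [exact IH2|].
    destruct IH2 as [<-|(q2&q2'&k1&k2&k3)]; [right; exists q1, q1'; auto|].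
    right. exists q1, q2'. repeat split; auto.
    rewrite h2 in k1. apply (S_inj HX) in k1. subst. congruence.
Qed.

Lemma cost_nn (l : list (E*E)) : 0 <= @chain_cost sh X l.
Proof. induction l as [|[p q] l IH]; simpl; [lra|]. pose proof (bd_nn p q). lra. Qed.

Lemma chain_pre {a a' : E} {l b} : tsim a a' -> @chain_ok sh X a' l b -> chain_ok a l b.
Proof.
  destruct l as [|[p q] l]; simpl; intros h1 h2.
  - eapply rst_trans; eauto.
  - destruct h2; split; auto. eapply rst_trans; eauto.
Qed.

Lemma chain_post {a : E} {l b b'} : @chain_ok sh X a l b -> tsim b b' -> chain_ok a l b'.
Proof.
  revert a; induction l as [|[p q] l IH]; simpl; intros a h1 h2.
  - eapply rst_trans; eauto.
  - destruct h1; split; auto.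
Qed.

Lemma chain_app {a : E} {l1 b l2 c} : @chain_ok sh X a l1 b -> chain_ok b l2 c -> chain_ok a (l1 ++ l2) c.
Proof.
  revert a; induction l1 as [|[p q] l IH]; simpl; intros a h1 h2.
  - eapply chain_pre; eauto.
  - destruct h1; split; auto.
Qed.

Lemma cost_app (l1 l2 : list (E*E)) : @chain_cost sh X (l1 ++ l2) = chain_cost l1 + chain_cost l2.
Proof. induction l1 as [|[p q] l IH]; simpl; [ring| rewrite IH; ring]. Qed.

Definition rchain (l : list (E * E)) := rev (map (fun pq => (snd pq, fst pq)) l).

Lemma chain_rev {a : E} {l b} : @chain_ok sh X a l b -> chain_ok b (rchain l) a.
Proof.
  revert a; induction l as [|[p q] l IH]; simpl; intros a h.
  - apply rst_sym; auto.
  - destruct h as [h1 h2]. unfold rchain; simpl. fold (rchain l).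
    eapply chain_app; [apply IH; exact h2|]. simpl. split; [apply rst_refl| apply rst_sym; auto].
Qed.

Lemma cost_rev (l : list (E*E)) : @chain_cost sh X (rchain l) = chain_cost l.
Proof.
  induction l as [|[p q] l IH]; simpl; [reflexivity|].
  unfold rchain; simpl; fold (rchain l). rewrite cost_app, IH; simpl. rewrite bd_sym. ring.
Qed.

Lemma tcls_eq {a b : E} : tsim a b -> tcls a = tcls b.
Proof.
  intros h. apply sig_eq; simpl. extensionality x. apply propositional_extensionality.
  split; intro k.
  - apply rst_trans with a; [apply rst_sym|]; auto.
  - eapply rst_trans; eauto.
Qed.

Lemma tcar_rep (A : tcar sh X) : exists a, A = tcls a.
Proof. destruct A as [A [a HA]]; exists a; apply sig_eq; simpl; exact HA. Qed.

Lemma mem_tcls {A : tcar sh X} {a} : proj1_sig A a -> A = tcls a.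
Proof.
  destruct (tcar_rep A) as [a0 ->]. simpl. intros h. apply tcls_eq; auto.
Qed.

Lemma mem_same {A : tcar sh X} {a b} : proj1_sig A a -> proj1_sig A b -> tsim a b.
Proof.
  destruct (tcar_rep A) as [a0 ->]. simpl. intros h1 h2.
  apply rst_trans with a0; [apply rst_sym|]; auto.
Qed.

Lemma tcls_mem (a : E) : proj1_sig (tcls a) a.
Proof. simpl. apply rst_refl. Qed.

Definition tE (A B : tcar sh X) r := exists a b l, proj1_sig A a /\ proj1_sig B b /\
  chain_ok a l b /\ r = chain_cost l.

Lemma tdist_glb (A B : tcar sh X) : is_glb_R (tE A B) (tdist A B).
Proof.
  apply Rinf_spec.
  - destruct (tcar_rep A) as [a0 ->], (tcar_rep B) as [b0 ->].
    exists (chain_cost [(a0, b0)]), a0, b0, [(a0, b0)]. simpl.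
    repeat split; try apply rst_refl.
  - intros r (a&b&l&_&_&_&->). apply cost_nn.
Qed.

Lemma tdist_le {A B : tcar sh X} {a b l} : proj1_sig A a -> proj1_sig B b -> chain_ok a l b ->
  tdist A B <= chain_cost l.
Proof. intros h1 h2 h3. apply (proj1 (tdist_glb A B)). exists a, b, l; auto. Qed.

Lemma tdist_lb (A B : tcar sh X) r :
  (forall a b l, proj1_sig A a -> proj1_sig B b -> chain_ok a l b -> r <= chain_cost l) ->
  r <= tdist A B.
Proof. intros h. apply (proj2 (tdist_glb A B)). intros x (a&b&l&h1&h2&h3&->). eauto. Qed.

Lemma tdist_approx (A B : tcar sh X) e : 0 < e ->
  exists a b l, proj1_sig A a /\ proj1_sig B b /\ chain_ok a l b /\ chain_cost l < tdist A B + e.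
Proof.
  intros he. apply NNPP; intro hn.
  assert (tdist A B + e <= tdist A B); [|lra].
  apply tdist_lb. intros a b l h1 h2 h3. apply Rnot_lt_le. intro k. apply hn.
  exists a, b, l; auto.
Qed.

Lemma tdist_bd (a b : E) : tdist (tcls a) (tcls b) <= bd a b.
Proof.
  assert (H : tdist (tcls a) (tcls b) <= chain_cost [(a, b)]).
  { eapply tdist_le; [apply tcls_mem | apply tcls_mem | simpl; split; apply rst_refl]. }
  simpl in H. lra.
Qed.

Lemma T_nn (A B : tcar sh X) : 0 <= tdist A B.
Proof. apply tdist_lb. intros; apply cost_nn. Qed.

Lemma T_sym (A B : tcar sh X) : tdist A B = tdist B A.
Proof.
  assert (forall A B : tcar sh X, tdist A B <= tdist B A).
  { intros A0 B0. apply tdist_lb. intros b a l h1 h2 h3.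
    rewrite <- cost_rev. eapply tdist_le; eauto. apply chain_rev; auto. }
  apply Rle_antisym; auto.
Qed.

Lemma T_tri (A B C : tcar sh X) : tdist A C <= tdist A B + tdist B C.
Proof.
  apply le_eps. intros e he.
  destruct (tdist_approx A B (e/2)) as (a&b&l1&h1&h2&h3&h4); [lra|].
  destruct (tdist_approx B C (e/2)) as (b'&c&l2&k1&k2&k3&k4); [lra|].
  assert (tdist A C <= chain_cost (l1 ++ l2)).
  { eapply tdist_le; eauto. eapply chain_app; [|exact k3].
    eapply chain_post; eauto. eapply mem_same; eauto. }
  rewrite cost_app in H. lra.
Qed.

Lemma T_le2 (A B : tcar sh X) : tdist A B <= 2.
Proof.
  destruct (tcar_rep A) as [a ->], (tcar_rep B) as [b ->].
  pose proof (tdist_bd a b). pose proof (bd_le2 a b). lra.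
Qed.

End Tens.

Section Lower.
Context {sh : shape} {X : SqData} (HX : isSquaMS X).
Notation E := (TE sh X).

Lemma Lstar (l : list (E * E)) : forall a b : E, chain_ok a l b ->
  bd a b <= chain_cost l \/
  exists q1 q2, sd X (snd a) (sS X q1) / 3 + sd X (snd b) (sS X q2) / 3 <= chain_cost l.
Proof.
  induction l as [|[p r] l IH]; intros a b h; simpl in *.
  - destruct (tsim_inv HX h) as [<-|(q&q'&h1&h2&_)].
    + left. rewrite (bd_refl HX). lra.
    + right. exists q, q'. rewrite h1, h2, !(d_refl HX). lra.
  - destruct h as [h1 h2]. specialize (IH r b h2).
    pose proof (cost_nn HX l). pose proof (bd_nn HX p r).
    destruct (tsim_inv HX h1) as [<-|(qa&qp&ka&kp&ks)].
    + destruct IH as [IH|(q1&q2&IH)].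
      * left. pose proof (bd_tri HX a r b). lra.
      * destruct (bd_case a r) as [[e1 k1]|[_ k1]].
        -- right. exists q1, q2. pose proof (d_tri HX (snd a) (snd r) (sS X q1)). lra.
        -- left. pose proof (bd_le2 HX a b). lra.
    + destruct IH as [IH|(q1&q2&IH)].
      * destruct (bd_case p b) as [[e1 k1]|[_ k1]].
        -- right. exists qa, qp. rewrite ka, (d_refl HX). rewrite (d_sym HX (snd b)), <- kp.
           pose proof (bd_tri HX p r b). lra.
        -- left. pose proof (bd_tri HX p r b). pose proof (bd_le2 HX a b). lra.
      * right. exists qa, q2. rewrite ka, (d_refl HX). pose proof (d_nn HX (snd r) (sS X q1)). lra.
Qed.

Lemma LL (n : Pel sh) (qb : M0) (l : list (E * E)) : forall e : E,
  chain_ok e l (n, sS X qb) ->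
  2 <= chain_cost l \/
  exists q, sd X (snd e) (sS X q) / 3 +
            L1 (scl (proj1_sig (fst e)) (proj1_sig q)) (scl (proj1_sig n) (proj1_sig qb)) <= chain_cost l.
Proof.
  induction l as [|[p r] l IH]; intros e h; simpl in *.
  - destruct (tsim_inv HX h) as [->|(q&q'&h1&h2&h3)].
    + right. exists qb. simpl. rewrite (d_refl HX), L1_refl. lra.
    + right. exists q. simpl in h2. apply (S_inj HX) in h2. subst q'.
      rewrite h1, (d_refl HX), h3, L1_refl. lra.
  - destruct h as [h1 h2]. specialize (IH r h2).
    pose proof (cost_nn HX l). pose proof (bd_nn HX p r).
    destruct IH as [IH|(q&IH)]; [left; lra|].
    destruct (bd_case p r) as [[e1 k1]|[_ k1]]; [|left; lra].
    rewrite <- e1 in IH.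
    pose proof (d_tri HX (snd p) (snd r) (sS X q)).
    destruct (tsim_inv HX h1) as [<-|(qe&qp&ke&kp&ks)].
    + right. exists q. lra.
    + right. exists qe. rewrite ke, (d_refl HX), ks.
      pose proof (L1_tri (scl (proj1_sig (fst p)) (proj1_sig qp)) (scl (proj1_sig (fst p)) (proj1_sig q))
                    (scl (proj1_sig n) (proj1_sig qb))).
      rewrite L1_scl in H2. pose proof (sq2 HX qp q). rewrite <- kp in H3. lra.
Qed.

Lemma glued_rep (a a' : E) qa : tsim a a' -> snd a = sS X qa ->
  exists qa', snd a' = sS X qa' /\
    scl (proj1_sig (fst a')) (proj1_sig qa') = scl (proj1_sig (fst a)) (proj1_sig qa).
Proof.
  intros h k. destruct (tsim_inv HX h) as [<-|(q&q'&h1&h2&h3)].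
  - exists qa; auto.
  - exists q'. rewrite k in h1. apply (S_inj HX) in h1. subst. auto.
Qed.

Lemma scl_bounds (m : Pel sh) (q : M0) :
  0 <= fst (scl (proj1_sig m) (proj1_sig q)) <= 1 /\ 0 <= snd (scl (proj1_sig m) (proj1_sig q)) <= 1.
Proof.
  destruct m as [[m1 m2] hm]. simpl. destruct hm as [h1 [h2 _]]. simpl in *. unfold scl; simpl.
  destruct (M0_bounds q).
  apply le_INR in h1, h2. pose proof (pos_INR m1). pose proof (pos_INR m2).
  simpl in h1, h2. split; split; lra.
Qed.

Lemma scl_L1_le2 (m n : Pel sh) (p q : M0) :
  L1 (scl (proj1_sig m) (proj1_sig p)) (scl (proj1_sig n) (proj1_sig q)) <= 2.
Proof.
  destruct (scl_bounds m p), (scl_bounds n q). unfold L1.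
  unfold Rabs; repeat destruct Rcase_abs; lra.
Qed.

Lemma LLg (a b : E) qa qb : snd a = sS X qa -> snd b = sS X qb ->
  L1 (scl (proj1_sig (fst a)) (proj1_sig qa)) (scl (proj1_sig (fst b)) (proj1_sig qb))
  <= tdist (tcls a) (tcls b).
Proof.
  intros ka kb. apply (tdist_lb HX). intros a' b' l ha hb hc. simpl in ha, hb.
  destruct (glued_rep a a' qa ha ka) as (qa'&ka'&sa').
  destruct (glued_rep b b' qb hb kb) as (qb'&kb'&sb').
  destruct b' as [n' v]; simpl in kb', sb'. subst v.
  destruct (LL n' qb' l a' hc) as [hc'|(q&hq)].
  - pose proof (scl_L1_le2 (fst a) (fst b) qa qb). lra.
  - rewrite <- sa', <- sb'. rewrite ka' in hq.
    pose proof (L1_tri (scl (proj1_sig (fst a')) (proj1_sig qa')) (scl (proj1_sig (fst a')) (proj1_sig q))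
                  (scl (proj1_sig n') (proj1_sig qb'))).
    rewrite L1_scl in H. pose proof (sq2 HX qa' q). lra.
Qed.

Lemma coord_cases (a b : nat) (x y : R) : 0 <= x <= 1 -> 0 <= y <= 1 ->
  INR a + x = INR b + y ->
  (a = b /\ x = y) \/ ((a = S b \/ b = S a) /\ (x = 0 \/ x = 1) /\ (y = 0 \/ y = 1)).
Proof.
  intros hx hy h. destruct (Nat.lt_total a b) as [k|[k|k]].
  - destruct (Nat.eq_dec b (S a)) as [->|k2].
    + rewrite S_INR in h. right. split; [right; auto|]. split; [right|left]; lra.
    + assert (INR (a + 2) <= INR b) by (apply le_INR; lia).
      rewrite plus_INR in H. simpl in H. lra.
  - subst. left. split; auto. lra.
  - destruct (Nat.eq_dec a (S b)) as [->|k2].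
    + rewrite S_INR in h. right. split; [left; auto|]. split; [left|right]; lra.
    + assert (INR (b + 2) <= INR a) by (apply le_INR; lia).
      rewrite plus_INR in H. simpl in H. lra.
Qed.

Lemma tstep (m n : Pel sh) (p q : M0) : adjacent (proj1_sig m) (proj1_sig n) ->
  scl (proj1_sig m) (proj1_sig p) = scl (proj1_sig n) (proj1_sig q) ->
  tsim (m, sS X p) (n, sS X q).
Proof. intros h1 h2. apply rst_step. exists p, q. simpl. auto. Qed.

Lemma W (m n : Pel sh) (p q : M0) :
  scl (proj1_sig m) (proj1_sig p) = scl (proj1_sig n) (proj1_sig q) -> tsim (m, sS X p) (n, sS X q).
Proof.
  intros H.
  destruct (M0_bounds p) as [bp1 bp2], (M0_bounds q) as [bq1 bq2].
  pose proof H as H'.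
  destruct m as [[m1 m2] hm], n as [[n1 n2] hn], p as [[p1 p2] hp], q as [[q1 q2] hq].
  simpl in *. unfold scl in H; simpl in H. injection H as H1 H2.
  assert (E1 : INR m1 + p1 = INR n1 + q1) by lra.
  assert (E2 : INR m2 + p2 = INR n2 + q2) by lra.
  destruct (coord_cases m1 n1 p1 q1 bp1 bq1 E1) as [[c1 d1]|[c1 [d1 d1']]];
  destruct (coord_cases m2 n2 p2 q2 bp2 bq2 E2) as [[c2 d2]|[c2 [d2 d2']]].
  - subst. assert (hn = hm) by apply proof_irrelevance.
    assert (hq = hp) by apply proof_irrelevance. subst. apply rst_refl.
  - apply tstep; auto. simpl. unfold adjacent; simpl. right. split; auto.
  - apply tstep; auto. simpl. unfold adjacent; simpl. left. split; auto.
  - assert (Hc : inP sh (n1, m2) \/ inP sh (m1, n2)).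
    { unfold inP in *; simpl in *. destruct hm as (hm1&hm2&hm3), hn as (hn1&hn2&hn3).
      destruct (classic ((n1, m2) = (1, 1)%nat)) as [e|e].
      - right. repeat split; auto. intros _ e'. injection e as e1 e2. injection e' as e3 e4. lia.
      - left. repeat split; auto. }
    assert (Hr1 : inM0 (q1, p2)).
    { unfold inM0, I01; simpl. split; [lra|split; [lra|]]. destruct d1' as [->| ->]; [left|right; left]; auto. }
    assert (Hr2 : inM0 (p1, q2)).
    { unfold inM0, I01; simpl. split; [lra|split; [lra|]]. destruct d1 as [->| ->]; [left|right; left]; auto. }
    destruct Hc as [Hc|Hc].
    + apply rst_trans with (exist _ (n1, m2) Hc, sS X (exist _ (q1, p2) Hr1)).
      * apply tstep; simpl. unfold adjacent; simpl. left; split; auto.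
        unfold scl; simpl. f_equal; lra.
      * apply tstep; simpl. unfold adjacent; simpl. right; split; auto.
        unfold scl; simpl. f_equal; lra.
    + apply rst_trans with (exist _ (m1, n2) Hc, sS X (exist _ (p1, q2) Hr2)).
      * apply tstep; simpl. unfold adjacent; simpl. right; split; auto.
        unfold scl; simpl. f_equal; lra.
      * apply tstep; simpl. unfold adjacent; simpl. left; split; auto.
        unfold scl; simpl. f_equal; lra.
Qed.

End Lower.

Lemma coord_split (x : R) : 0 <= x <= 1 -> exists (j : nat) (x' : R), (j <= 2)%nat /\ 0 <= x' <= 1 /\
  (INR j + x') / 3 = x /\ (x = 0 -> j = 0%nat /\ x' = 0) /\ (x = 1 -> j = 2%nat /\ x' = 1).
Proof.
  intros hx. destruct (Rle_lt_dec x (1/3)) as [h1|h1].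
  - exists 0%nat, (3 * x). split; [lia|]. split; [lra|]. split; [simpl; lra|].
    split; intros h; [split; [reflexivity|lra]| exfalso; lra].
  - destruct (Rle_lt_dec x (2/3)) as [h2|h2].
    + exists 1%nat, (3 * x - 1). split; [lia|]. split; [lra|]. split; [simpl; lra|].
      split; intros h; exfalso; lra.
    + exists 2%nat, (3 * x - 2). split; [lia|]. split; [lra|]. split; [simpl; lra|].
      split; intros h; [exfalso; lra| split; [reflexivity|lra]].
Qed.

Lemma inv_pos (n : nat) : 0 < / (INR n + 1).
Proof. apply Rinv_0_lt_compat. pose proof (pos_INR n). lra. Qed.

Lemma small_inv (e : R) : 0 < e -> exists N, forall n, (N <= n)%nat -> / (INR n + 1) < e.
Proof.
  intros he. destruct (archimed_cor1 e he) as [N [h1 h2]]. exists N. intros n hn.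
  apply le_INR in hn. apply lt_0_INR in h2.
  assert (/ (INR n + 1) <= / INR N) by (apply Rinv_le_contravar; lra). lra.
Qed.

Lemma pigeon (B : nat) : forall (c : nat -> nat), (forall j, (c j <= B)%nat) ->
  exists v, (v <= B)%nat /\ forall J, exists j, (J <= j)%nat /\ c j = v.
Proof.
  induction B as [|B IH]; intros c hc.
  - exists 0%nat. split; auto. intros J. exists J. split; auto. specialize (hc J). lia.
  - destruct (classic (forall J, exists j, (J <= j)%nat /\ c j = S B)) as [h|h].
    + exists (S B). auto.
    + apply not_all_ex_not in h. destruct h as [J0 h].
      destruct (IH (fun j => c (j + J0)%nat)) as [v [hv1 hv2]].
      * intros j. specialize (hc (j + J0)%nat). destruct (Nat.eq_dec (c (j + J0)%nat) (S B)) as [e|e].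
        -- exfalso. apply h. exists (j + J0)%nat. split; [lia|auto].
        -- lia.
      * exists v. split; [lia|]. intros J. destruct (hv2 J) as [j [hj1 hj2]].
        exists (j + J0)%nat. split; [lia|auto].
Qed.

Lemma lim_bounds (u : nat -> R) t a b : Un_cv u t -> (forall n, a <= u n <= b) -> a <= t <= b.
Proof.
  intros hu hb. split.
  - destruct (Rle_or_lt a t) as [h|h]; auto. destruct (hu (a - t)) as [N hN]; [lra|].
    specialize (hN N (le_n _)). specialize (hb N). unfold R_dist in hN.
    unfold Rabs in hN. destruct Rcase_abs in hN; lra.
  - destruct (Rle_or_lt t b) as [h|h]; auto. destruct (hu (t - b)) as [N hN]; [lra|].
    specialize (hN N (le_n _)). specialize (hb N). unfold R_dist in hN.
    unfold Rabs in hN. destruct Rcase_abs in hN; lra.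
Qed.

Lemma cluster (B : nat) (c : nat -> nat) (f : nat -> R) (a b : R) :
  (forall j, (c j <= B)%nat) -> (forall j, a <= f j <= b) ->
  (forall e, 0 < e -> exists N, forall i j, (N <= i)%nat -> (N <= j)%nat -> c i = c j -> Rabs (f i - f j) < e) ->
  exists v t, a <= t <= b /\ (exists j0, c j0 = v) /\
    forall e, 0 < e -> forall J, exists j, (J <= j)%nat /\ c j = v /\ Rabs (f j - t) < e.
Proof.
  intros hc hf hC. destruct (pigeon B c hc) as [v [_ hv]].
  set (h := fun n => epsilon (inhabits 0%nat) (fun j => (n <= j)%nat /\ c j = v)).
  assert (hs : forall n, (n <= h n)%nat /\ c (h n) = v).
  { intros n. unfold h. apply epsilon_spec. apply hv. }
  assert (hcc : Cauchy_crit (fun n => f (h n))).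
  { intros e he. destruct (hC e he) as [N hN]. exists N. intros n m hn hm.
    unfold R_dist. destruct (hs n), (hs m). apply hN; [lia|lia|congruence]. }
  destruct (R_complete _ hcc) as [t ht].
  exists v, t. split; [apply (lim_bounds _ t a b ht); intros; apply hf|].
  split; [exists (h 0%nat); apply hs|].
  intros e he J. destruct (ht e he) as [N hN].
  exists (h (Nat.max N J)). destruct (hs (Nat.max N J)) as [k1 k2].
  split; [lia|]. split; auto. apply hN. lia.
Qed.

Definition side (q : M0) : nat :=
  if Req_EM_T (fst (proj1_sig q)) 0 then 0%nat else
  if Req_EM_T (fst (proj1_sig q)) 1 then 1%nat else
  if Req_EM_T (snd (proj1_sig q)) 0 then 2%nat else 3%nat.
Definition par (q : M0) : R := if Nat.leb (side q) 1 then snd (proj1_sig q) else fst (proj1_sig q).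

Lemma side_facts (q : M0) :
  (side q = 0%nat /\ fst (proj1_sig q) = 0 /\ par q = snd (proj1_sig q)) \/
  (side q = 1%nat /\ fst (proj1_sig q) = 1 /\ par q = snd (proj1_sig q)) \/
  (side q = 2%nat /\ snd (proj1_sig q) = 0 /\ par q = fst (proj1_sig q)) \/
  (side q = 3%nat /\ snd (proj1_sig q) = 1 /\ par q = fst (proj1_sig q)).
Proof.
  unfold par, side. destruct q as [[x y] hq]; simpl.
  destruct hq as [_ [_ hb]]; simpl in hb.
  destruct (Req_EM_T x 0); [left; simpl; repeat split; auto|].
  destruct (Req_EM_T x 1); [right; left; simpl; repeat split; auto|].
  destruct (Req_EM_T y 0); [right; right; left; simpl; repeat split; auto|].
  right; right; right. simpl. repeat split; auto. destruct hb as [h|[h|[h|h]]]; try contradiction; auto.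
Qed.

Lemma side_le (q : M0) : (side q <= 3)%nat.
Proof. unfold side. repeat destruct Req_EM_T; lia. Qed.

Lemma par_bounds (q : M0) : 0 <= par q <= 1.
Proof.
  destruct (M0_bounds q).
  destruct (side_facts q) as [(s1&f1&p1)|[(s1&f1&p1)|[(s1&f1&p1)|(s1&f1&p1)]]]; rewrite p1; auto.
Qed.

Lemma side_par_L1 (q q' : M0) : side q = side q' -> Rabs (par q - par q') <= L1 (proj1_sig q) (proj1_sig q').
Proof.
  intros hs. unfold L1.
  pose proof (Rabs_pos (fst (proj1_sig q) - fst (proj1_sig q'))).
  pose proof (Rabs_pos (snd (proj1_sig q) - snd (proj1_sig q'))).
  destruct (side_facts q) as [(s1&f1&p1)|[(s1&f1&p1)|[(s1&f1&p1)|(s1&f1&p1)]]];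
  destruct (side_facts q') as [(s2&f2&p2)|[(s2&f2&p2)|[(s2&f2&p2)|(s2&f2&p2)]]];
  try (exfalso; congruence); rewrite p1, p2; lra.
Qed.

Section Side.
Context {X : SqData} (HX : isSquaMS X).

Lemma side_dist (q q' : M0) : side q = side q' -> sd X (sS X q) (sS X q') = Rabs (par q' - par q).
Proof.
  intros hs.
  destruct (side_facts q) as [(s1&f1&p1)|[(s1&f1&p1)|[(s1&f1&p1)|(s1&f1&p1)]]];
  destruct (side_facts q') as [(s2&f2&p2)|[(s2&f2&p2)|[(s2&f2&p2)|(s2&f2&p2)]]];
  try (exfalso; congruence); rewrite p1, p2.
  - apply (sq1a HX); [congruence| left; auto].
  - apply (sq1a HX); [congruence| right; auto].
  - apply (sq1b HX); [congruence| left; auto].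
  - apply (sq1b HX); [congruence| right; auto].
Qed.

Lemma side_pt (v : nat) (t : R) : (v <= 3)%nat -> 0 <= t <= 1 ->
  exists qs : M0, forall q : M0, side q = v -> sd X (sS X q) (sS X qs) = Rabs (t - par q).
Proof.
  intros hv ht. destruct v as [|[|[|[|v]]]]; [| | | |lia].
  - assert (h : inM0 (0, t)) by (unfold inM0, I01; simpl; split; [lra|split; [lra|left; reflexivity]]).
    exists (exist _ _ h). intros q hq.
    destruct (side_facts q) as [(s1&f1&p1)|[(s1&f1&p1)|[(s1&f1&p1)|(s1&f1&p1)]]]; try (exfalso; congruence).
    rewrite p1. apply (sq1a HX); simpl; [auto| left; auto].
  - assert (h : inM0 (1, t)) by (unfold inM0, I01; simpl; split; [lra|split; [lra|right; left; reflexivity]]).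
    exists (exist _ _ h). intros q hq.
    destruct (side_facts q) as [(s1&f1&p1)|[(s1&f1&p1)|[(s1&f1&p1)|(s1&f1&p1)]]]; try (exfalso; congruence).
    rewrite p1. apply (sq1a HX); simpl; [auto| right; auto].
  - assert (h : inM0 (t, 0)) by (unfold inM0, I01; simpl; split; [lra|split; [lra|right; right; left; reflexivity]]).
    exists (exist _ _ h). intros q hq.
    destruct (side_facts q) as [(s1&f1&p1)|[(s1&f1&p1)|[(s1&f1&p1)|(s1&f1&p1)]]]; try (exfalso; congruence).
    rewrite p1. apply (sq1b HX); simpl; [auto| left; auto].
  - assert (h : inM0 (t, 1)) by (unfold inM0, I01; simpl; split; [lra|split; [lra|right; right; right; reflexivity]]).
    exists (exist _ _ h). intros q hq.
    destruct (side_facts q) as [(s1&f1&p1)|[(s1&f1&p1)|[(s1&f1&p1)|(s1&f1&p1)]]]; try (exfalso; congruence).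
    rewrite p1. apply (sq1b HX); simpl; [auto| right; auto].
Qed.

Lemma closed_S (u : X) : (forall e, 0 < e -> exists q, sd X u (sS X q) < e) -> exists q, u = sS X q.
Proof.
  intros H.
  set (qn := fun n : nat => epsilon (inhabits m00) (fun q => sd X u (sS X q) < / (INR n + 1))).
  assert (hq : forall n, sd X u (sS X (qn n)) < / (INR n + 1)).
  { intros n. unfold qn. apply epsilon_spec. apply H. apply inv_pos. }
  destruct (cluster 3 (fun n => side (qn n)) (fun n => par (qn n)) 0 1) as (v&t&ht&[j0 hj0]&hcl).
  - intros j. apply side_le.
  - intros j. apply par_bounds.
  - intros e he. destruct (small_inv (e/2)) as [N hN]; [lra|]. exists N. intros i j hi hj hs.
    rewrite Rabs_minus_sym. rewrite <- (side_dist (qn i) (qn j) hs).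
    pose proof (d_tri HX (sS X (qn i)) u (sS X (qn j))). rewrite (d_sym HX _ u) in H0.
    pose proof (hq i). pose proof (hq j). pose proof (hN i hi). pose proof (hN j hj). lra.
  - assert (hv : (v <= 3)%nat) by (rewrite <- hj0; apply side_le).
    destruct (side_pt v t hv ht) as [qs hqs]. exists qs. apply (d_eq0 HX).
    apply Rle_antisym; [|apply (d_nn HX)]. apply le_eps. intros e he. rewrite Rplus_0_l.
    destruct (small_inv (e/2)) as [N hN]; [lra|].
    destruct (hcl (e/2) ltac:(lra) N) as (j&hj&hsj&hpj).
    pose proof (hqs (qn j) hsj). pose proof (d_tri HX u (sS X (qn j)) (sS X qs)).
    pose proof (hq j). pose proof (hN j hj). rewrite Rabs_minus_sym in H0. lra.
Qed.

End Side.

Lemma L1_zero a b : L1 a b = 0 -> a = b.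
Proof.
  destruct a as [a1 a2], b as [b1 b2]. unfold L1; simpl. intros h.
  unfold Rabs in h. destruct Rcase_abs, Rcase_abs in h; f_equal; lra.
Qed.

Section TS.
Context {sh : shape} {X : SqData} (HX : isSquaMS X).
Notation E := (TE sh X).

Lemma rep_exists (p : M0) : exists mq : Pel sh * M0,
  scl (proj1_sig (fst mq)) (proj1_sig (snd mq)) = proj1_sig p.
Proof.
  destruct p as [[x y] hp]. simpl. pose proof hp as hp'. destruct hp' as [hx [hy hb]]. simpl in *. unfold I01 in *.
  destruct (coord_split x hx) as (j1&x'&hj1&hx'&ex&zx&ox).
  destruct (coord_split y hy) as (j2&y'&hj2&hy'&ey&zy&oy).
  assert (hm : inP sh (j1, j2)).
  { unfold inP; simpl. split; [lia|split;[lia|]]. intros _ e. injection e as e1 e2. subst.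
    destruct hb as [h|[h|[h|h]]]; [apply zx in h|apply ox in h|apply zy in h|apply oy in h];
    destruct h as [h _]; discriminate. }
  assert (hq : inM0 (x', y')).
  { unfold inM0, I01; simpl. split; [lra|split;[lra|]]. destruct hb as [h|[h|[h|h]]].
    - left; apply zx; auto.
    - right; left; apply ox; auto.
    - right; right; left; apply zy; auto.
    - right; right; right; apply oy; auto. }
  exists (exist _ (j1,j2) hm, exist _ (x',y') hq). simpl. unfold scl; simpl. rewrite ex, ey. reflexivity.
Qed.

Lemma tS_spec (p : M0) (m : Pel sh) (q : M0) : scl (proj1_sig m) (proj1_sig q) = proj1_sig p ->
  tS sh X p = tcls (m, sS X q).
Proof.
  intros h. unfold tS.
  match goal with |- context [epsilon ?i ?P] =>
    pose proof (epsilon_spec i P (rep_exists p)) as Hs; set (mq := epsilon i P) in * end.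
  cbv beta in Hs. apply tcls_eq. apply W. rewrite Hs. symmetry. exact h.
Qed.

Lemma notglued_eq (a b : E) : ~ (exists q, snd a = sS X q) -> tdist (tcls a) (tcls b) = 0 -> a = b.
Proof.
  intros ng h0.
  assert (he0 : exists e0, 0 < e0 /\ forall q, e0 <= sd X (snd a) (sS X q)).
  { apply NNPP. intro hn. apply ng. apply (closed_S HX). intros e he. apply NNPP. intro hq. apply hn.
    exists e. split; auto. intros q. apply Rnot_lt_le. intro k. apply hq. exists q; auto. }
  destruct he0 as [e0 [he0 hq0]].
  assert (hle : e0 <= 2) by (pose proof (hq0 m00); pose proof (d_le2 HX (snd a) (sS X m00)); lra).
  assert (hb : forall e, 0 < e -> e <= e0/3 -> bd a b < e).
  { intros e he he'. destruct (tdist_approx HX (tcls a) (tcls b) e he) as (a'&b'&l&ha&hb&hc&hcost).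
    rewrite h0, Rplus_0_l in hcost. simpl in ha, hb.
    destruct (tsim_inv HX ha) as [<-|(q&q'&k1&_)]; [|exfalso; apply ng; exists q; auto].
    destruct (Lstar HX l a b' hc) as [k|(q1&q2&k)].
    2: { pose proof (hq0 q1). pose proof (d_nn HX (snd b') (sS X q2)). lra. }
    destruct (bd_case a b') as [[e1 k1]|[_ k1]]; [|lra].
    destruct (tsim_inv HX hb) as [<-|(q&q'&k2&k3&_)]; [lra|].
    exfalso. rewrite k3 in k1. pose proof (hq0 q'). lra. }
  assert (hz : bd a b = 0).
  { apply Rle_antisym; [|apply (bd_nn HX)]. apply le_eps. intros e he.
    assert (h1 : 0 < Rmin e (e0/3)) by (apply Rmin_glb_lt; lra).
    pose proof (Rmin_l e (e0/3)). pose proof (Rmin_r e (e0/3)).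
    pose proof (hb _ h1 H0). lra. }
  destruct (bd_case a b) as [[e1 k1]|[_ k1]]; [|lra].
  destruct a as [ma ua], b as [mb ub]; simpl in *. subst mb. f_equal. apply (d_eq0 HX). lra.
Qed.

Lemma T_eq0 (A B : tcar sh X) : tdist A B = 0 -> A = B.
Proof.
  destruct (tcar_rep A) as [a ->], (tcar_rep B) as [b ->]. intros h.
  destruct (classic (exists q, snd a = sS X q)) as [[qa ka]|na].
  - destruct (classic (exists q, snd b = sS X q)) as [[qb kb]|nb].
    + pose proof (LLg HX a b qa qb ka kb) as hL. rewrite h in hL.
      pose proof (L1_nn (scl (proj1_sig (fst a)) (proj1_sig qa)) (scl (proj1_sig (fst b)) (proj1_sig qb))).
      assert (hs : scl (proj1_sig (fst a)) (proj1_sig qa) = scl (proj1_sig (fst b)) (proj1_sig qb))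
        by (apply L1_zero; lra).
      destruct a as [ma ua], b as [mb ub]; simpl in *; subst ua ub.
      apply tcls_eq. apply W. exact hs.
    + rewrite (T_sym HX) in h. symmetry. f_equal. apply notglued_eq; auto.
  - f_equal. apply notglued_eq; auto.
Qed.

Lemma sq2_T (p q : M0) : L1 (proj1_sig p) (proj1_sig q) <= tdist (tS sh X p) (tS sh X q).
Proof.
  destruct (rep_exists p) as [[m a] ha], (rep_exists q) as [[n b] hb]. simpl in *.
  rewrite (tS_spec p m a ha), (tS_spec q n b hb).
  pose proof (LLg HX (m, sS X a) (n, sS X b) a b eq_refl eq_refl) as H. simpl in H.
  rewrite ha, hb in H. exact H.
Qed.

Lemma tS_inj (p q : M0) : tS sh X p = tS sh X q -> p = q.
Proof.
  intros h. pose proof (sq2_T p q) as H. rewrite h, (tdist_refl (d_nn HX)) in H.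
  apply sig_eq. apply L1_zero. pose proof (L1_nn (proj1_sig p) (proj1_sig q)). lra.
Qed.

Lemma seg_up (p q : M0) (m : Pel sh) (a b : M0) :
  scl (proj1_sig m) (proj1_sig a) = proj1_sig p -> scl (proj1_sig m) (proj1_sig b) = proj1_sig q ->
  tdist (tS sh X p) (tS sh X q) <= sd X (sS X a) (sS X b) / 3.
Proof.
  intros ha hb. rewrite (tS_spec p m a ha), (tS_spec q m b hb).
  pose proof (tdist_bd HX (m, sS X a) (m, sS X b)).
  destruct (bd_case (m, sS X a) (m, sS X b)) as [[_ k]|[k _]]; [simpl in k; lra| simpl in k; congruence].
Qed.

Lemma third_a (p q : M0) (j : nat) : (j <= 2)%nat -> fst (proj1_sig p) = fst (proj1_sig q) ->
  (fst (proj1_sig p) = 0 \/ fst (proj1_sig p) = 1) ->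
  INR j / 3 <= snd (proj1_sig p) <= (INR j + 1) / 3 ->
  INR j / 3 <= snd (proj1_sig q) <= (INR j + 1) / 3 ->
  tdist (tS sh X p) (tS sh X q) <= Rabs (snd (proj1_sig q) - snd (proj1_sig p)).
Proof.
  intros hj hf hi hp hq. destruct (M0_bounds p), (M0_bounds q).
  set (P := p). set (Q := q).
  destruct p as [[p1 p2] hp0], q as [[q1 q2] hq0]. simpl in *. subst q1.
  assert (hci : exists ci : nat, (ci <= 2)%nat /\ ci <> 1%nat /\ (INR ci + p1) / 3 = p1).
  { destruct hi as [h|h]; [exists 0%nat | exists 2%nat]; simpl; rewrite h; repeat split; try lia; lra. }
  destruct hci as (ci & hc1 & hc2 & hc3).
  assert (hm : inP sh (ci, j)).
  { unfold inP; simpl. split; [lia|split;[lia|]]. intros _ e. injection e as e1 e2. lia. }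
  assert (ha : inM0 (p1, 3 * p2 - INR j)).
  { unfold inM0, I01; simpl. split; [lra|split;[lra|]]. destruct hi; [left|right;left]; auto. }
  assert (hb : inM0 (p1, 3 * q2 - INR j)).
  { unfold inM0, I01; simpl. split; [lra|split;[lra|]]. destruct hi; [left|right;left]; auto. }
  eapply Rle_trans.
  - apply (seg_up P Q (exist _ (ci,j) hm) (exist _ _ ha) (exist _ _ hb)).
    + unfold P; simpl. apply injective_projections; unfold scl; simpl; lra.
    + unfold Q; simpl. apply injective_projections; unfold scl; simpl; lra.
  - rewrite (sq1a HX (exist _ _ ha) (exist _ _ hb)); simpl; auto.
    replace (3 * q2 - INR j - (3 * p2 - INR j)) with (3 * (q2 - p2)) by ring.
    rewrite Rabs_mult, (Rabs_right 3) by lra. lra.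
Qed.

Lemma third_b (p q : M0) (j : nat) : (j <= 2)%nat -> snd (proj1_sig p) = snd (proj1_sig q) ->
  (snd (proj1_sig p) = 0 \/ snd (proj1_sig p) = 1) ->
  INR j / 3 <= fst (proj1_sig p) <= (INR j + 1) / 3 ->
  INR j / 3 <= fst (proj1_sig q) <= (INR j + 1) / 3 ->
  tdist (tS sh X p) (tS sh X q) <= Rabs (fst (proj1_sig q) - fst (proj1_sig p)).
Proof.
  intros hj hf hi hp hq. destruct (M0_bounds p), (M0_bounds q).
  set (P := p). set (Q := q).
  destruct p as [[p1 p2] hp0], q as [[q1 q2] hq0]. simpl in *. subst q2.
  assert (hci : exists ci : nat, (ci <= 2)%nat /\ ci <> 1%nat /\ (INR ci + p2) / 3 = p2).
  { destruct hi as [h|h]; [exists 0%nat | exists 2%nat]; simpl; rewrite h; repeat split; try lia; lra. }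
  destruct hci as (ci & hc1 & hc2 & hc3).
  assert (hm : inP sh (j, ci)).
  { unfold inP; simpl. split; [lia|split;[lia|]]. intros _ e. injection e as e1 e2. lia. }
  assert (ha : inM0 (3 * p1 - INR j, p2)).
  { unfold inM0, I01; simpl. split; [lra|split;[lra|]]. destruct hi; [right;right;left|right;right;right]; auto. }
  assert (hb : inM0 (3 * q1 - INR j, p2)).
  { unfold inM0, I01; simpl. split; [lra|split;[lra|]]. destruct hi; [right;right;left|right;right;right]; auto. }
  eapply Rle_trans.
  - apply (seg_up P Q (exist _ (j,ci) hm) (exist _ _ ha) (exist _ _ hb)).
    + unfold P; simpl. apply injective_projections; unfold scl; simpl; lra.
    + unfold Q; simpl. apply injective_projections; unfold scl; simpl; lra.
  - rewrite (sq1b HX (exist _ _ ha) (exist _ _ hb)); simpl; auto.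
    replace (3 * q1 - INR j - (3 * p1 - INR j)) with (3 * (q1 - p1)) by ring.
    rewrite Rabs_mult, (Rabs_right 3) by lra. lra.
Qed.

End TS.

Section TS2.
Context {sh : shape} {X : SqData} (HX : isSquaMS X).

Lemma ta (p q : M0) (j : nat) : (j <= 2)%nat -> fst (proj1_sig p) = fst (proj1_sig q) ->
  (fst (proj1_sig p) = 0 \/ fst (proj1_sig p) = 1) ->
  INR j / 3 <= snd (proj1_sig p) -> snd (proj1_sig p) <= snd (proj1_sig q) ->
  snd (proj1_sig q) <= (INR j + 1) / 3 ->
  tdist (tS sh X p) (tS sh X q) <= snd (proj1_sig q) - snd (proj1_sig p).
Proof.
  intros. rewrite <- (Rabs_right (snd (proj1_sig q) - snd (proj1_sig p))) by lra.
  apply (third_a HX p q j); auto; lra.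
Qed.

Lemma tb (p q : M0) (j : nat) : (j <= 2)%nat -> snd (proj1_sig p) = snd (proj1_sig q) ->
  (snd (proj1_sig p) = 0 \/ snd (proj1_sig p) = 1) ->
  INR j / 3 <= fst (proj1_sig p) -> fst (proj1_sig p) <= fst (proj1_sig q) ->
  fst (proj1_sig q) <= (INR j + 1) / 3 ->
  tdist (tS sh X p) (tS sh X q) <= fst (proj1_sig q) - fst (proj1_sig p).
Proof.
  intros. rewrite <- (Rabs_right (fst (proj1_sig q) - fst (proj1_sig p))) by lra.
  apply (third_b HX p q j); auto; lra.
Qed.

Lemma side_a_ord (p q : M0) : fst (proj1_sig p) = fst (proj1_sig q) ->
  (fst (proj1_sig p) = 0 \/ fst (proj1_sig p) = 1) -> snd (proj1_sig p) <= snd (proj1_sig q) ->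
  tdist (tS sh X p) (tS sh X q) <= snd (proj1_sig q) - snd (proj1_sig p).
Proof.
  intros hf hi hle. destruct (M0_bounds p), (M0_bounds q).
  assert (hb1 : inM0 (fst (proj1_sig p), 1/3)).
  { hnf; unfold I01; simpl. split; [lra|split; [lra|]]. destruct hi; [left|right;left]; auto. }
  assert (hb2 : inM0 (fst (proj1_sig p), 2/3)).
  { hnf; unfold I01; simpl. split; [lra|split; [lra|]]. destruct hi; [left|right;left]; auto. }
  set (B1 := exist _ _ hb1 : M0). set (B2 := exist _ _ hb2 : M0).
  assert (f1 : fst (proj1_sig B1) = fst (proj1_sig p)) by reflexivity.
  assert (f2 : fst (proj1_sig B2) = fst (proj1_sig p)) by reflexivity.
  assert (s1 : snd (proj1_sig B1) = 1/3) by reflexivity.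
  assert (s2 : snd (proj1_sig B2) = 2/3) by reflexivity.
  assert (hi1 : fst (proj1_sig B1) = 0 \/ fst (proj1_sig B1) = 1) by (rewrite f1; auto).
  assert (hi2 : fst (proj1_sig B2) = 0 \/ fst (proj1_sig B2) = 1) by (rewrite f2; auto).
  clearbody B1 B2.
  pose proof (T_tri HX (tS sh X p) (tS sh X B1) (tS sh X q)) as t1.
  pose proof (T_tri HX (tS sh X p) (tS sh X B2) (tS sh X q)) as t2.
  pose proof (T_tri HX (tS sh X B1) (tS sh X B2) (tS sh X q)) as t3.
  destruct (Rle_lt_dec (snd (proj1_sig q)) (1/3)).
  { apply (ta p q 0); simpl; auto; lra. }
  destruct (Rle_lt_dec (snd (proj1_sig p)) (1/3)).
  - destruct (Rle_lt_dec (snd (proj1_sig q)) (2/3)).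
    + pose proof (ta p B1 0 ltac:(lia) ltac:(congruence) hi ltac:(simpl; lra) ltac:(lra) ltac:(simpl; lra)).
      pose proof (ta B1 q 1 ltac:(lia) ltac:(congruence) hi1 ltac:(simpl; lra) ltac:(lra) ltac:(simpl; lra)).
      lra.
    + pose proof (ta p B1 0 ltac:(lia) ltac:(congruence) hi ltac:(simpl; lra) ltac:(lra) ltac:(simpl; lra)).
      pose proof (ta B1 B2 1 ltac:(lia) ltac:(congruence) hi1 ltac:(simpl; lra) ltac:(lra) ltac:(simpl; lra)).
      pose proof (ta B2 q 2 ltac:(lia) ltac:(congruence) hi2 ltac:(simpl; lra) ltac:(lra) ltac:(simpl; lra)).
      lra.
  - destruct (Rle_lt_dec (snd (proj1_sig q)) (2/3)).
    + apply (ta p q 1); simpl; auto; lra.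
    + destruct (Rle_lt_dec (snd (proj1_sig p)) (2/3)).
      * pose proof (ta p B2 1 ltac:(lia) ltac:(congruence) hi ltac:(simpl; lra) ltac:(lra) ltac:(simpl; lra)).
        pose proof (ta B2 q 2 ltac:(lia) ltac:(congruence) hi2 ltac:(simpl; lra) ltac:(lra) ltac:(simpl; lra)).
        lra.
      * apply (ta p q 2); simpl; auto; lra.
Qed.

Lemma side_b_ord (p q : M0) : snd (proj1_sig p) = snd (proj1_sig q) ->
  (snd (proj1_sig p) = 0 \/ snd (proj1_sig p) = 1) -> fst (proj1_sig p) <= fst (proj1_sig q) ->
  tdist (tS sh X p) (tS sh X q) <= fst (proj1_sig q) - fst (proj1_sig p).
Proof.
  intros hf hi hle. destruct (M0_bounds p), (M0_bounds q).
  assert (hb1 : inM0 (1/3, snd (proj1_sig p))).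
  { hnf; unfold I01; simpl. split; [lra|split; [lra|]]. destruct hi; [right;right;left|right;right;right]; auto. }
  assert (hb2 : inM0 (2/3, snd (proj1_sig p))).
  { hnf; unfold I01; simpl. split; [lra|split; [lra|]]. destruct hi; [right;right;left|right;right;right]; auto. }
  set (B1 := exist _ _ hb1 : M0). set (B2 := exist _ _ hb2 : M0).
  assert (f1 : snd (proj1_sig B1) = snd (proj1_sig p)) by reflexivity.
  assert (f2 : snd (proj1_sig B2) = snd (proj1_sig p)) by reflexivity.
  assert (s1 : fst (proj1_sig B1) = 1/3) by reflexivity.
  assert (s2 : fst (proj1_sig B2) = 2/3) by reflexivity.
  assert (hi1 : snd (proj1_sig B1) = 0 \/ snd (proj1_sig B1) = 1) by (rewrite f1; auto).
  assert (hi2 : snd (proj1_sig B2) = 0 \/ snd (proj1_sig B2) = 1) by (rewrite f2; auto).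
  clearbody B1 B2.
  pose proof (T_tri HX (tS sh X p) (tS sh X B1) (tS sh X q)) as t1.
  pose proof (T_tri HX (tS sh X p) (tS sh X B2) (tS sh X q)) as t2.
  pose proof (T_tri HX (tS sh X B1) (tS sh X B2) (tS sh X q)) as t3.
  destruct (Rle_lt_dec (fst (proj1_sig q)) (1/3)).
  { apply (tb p q 0); simpl; auto; lra. }
  destruct (Rle_lt_dec (fst (proj1_sig p)) (1/3)).
  - destruct (Rle_lt_dec (fst (proj1_sig q)) (2/3)).
    + pose proof (tb p B1 0 ltac:(lia) ltac:(congruence) hi ltac:(simpl; lra) ltac:(lra) ltac:(simpl; lra)).
      pose proof (tb B1 q 1 ltac:(lia) ltac:(congruence) hi1 ltac:(simpl; lra) ltac:(lra) ltac:(simpl; lra)).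
      lra.
    + pose proof (tb p B1 0 ltac:(lia) ltac:(congruence) hi ltac:(simpl; lra) ltac:(lra) ltac:(simpl; lra)).
      pose proof (tb B1 B2 1 ltac:(lia) ltac:(congruence) hi1 ltac:(simpl; lra) ltac:(lra) ltac:(simpl; lra)).
      pose proof (tb B2 q 2 ltac:(lia) ltac:(congruence) hi2 ltac:(simpl; lra) ltac:(lra) ltac:(simpl; lra)).
      lra.
  - destruct (Rle_lt_dec (fst (proj1_sig q)) (2/3)).
    + apply (tb p q 1); simpl; auto; lra.
    + destruct (Rle_lt_dec (fst (proj1_sig p)) (2/3)).
      * pose proof (tb p B2 1 ltac:(lia) ltac:(congruence) hi ltac:(simpl; lra) ltac:(lra) ltac:(simpl; lra)).
        pose proof (tb B2 q 2 ltac:(lia) ltac:(congruence) hi2 ltac:(simpl; lra) ltac:(lra) ltac:(simpl; lra)).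
        lra.
      * apply (tb p q 2); simpl; auto; lra.
Qed.

Theorem TD_sq : isSquaMS (TD sh X).
Proof.
  unfold isSquaMS; simpl.
  split; [apply (T_nn HX)|].
  split; [intros A B; split; [apply (T_eq0 HX)| intros ->; apply (tdist_refl (d_nn HX))]|].
  split; [apply (T_sym HX)|].
  split; [intros; apply (T_tri HX)|].
  split; [apply (T_le2 HX)|].
  split; [apply (tS_inj HX)|].
  split.
  { intros p q h1 h2. pose proof (@sq2_T sh X HX p q) as hs. unfold L1 in hs.
    rewrite h1, Rminus_diag, Rabs_R0, Rplus_0_l, Rabs_minus_sym in hs.
    apply Rle_antisym; [|exact hs].
    destruct (Rle_lt_dec (snd (proj1_sig p)) (snd (proj1_sig q))).
    - rewrite Rabs_right by lra. apply side_a_ord; auto.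
    - rewrite (T_sym HX), Rabs_minus_sym, Rabs_right by lra. apply side_a_ord; [congruence | rewrite <- h1; auto | lra]. }
  split.
  { intros p q h1 h2. pose proof (@sq2_T sh X HX p q) as hs. unfold L1 in hs.
    rewrite h1, (Rminus_diag (snd (proj1_sig q))), Rabs_R0, Rplus_0_r, Rabs_minus_sym in hs.
    apply Rle_antisym; [|exact hs].
    destruct (Rle_lt_dec (fst (proj1_sig p)) (fst (proj1_sig q))).
    - rewrite Rabs_right by lra. apply side_b_ord; auto.
    - rewrite (T_sym HX), Rabs_minus_sym, Rabs_right by lra. apply side_b_ord; [congruence | rewrite <- h1; auto | lra]. }
  intros p q. apply (@sq2_T sh X HX).
Qed.

End TS2.

Lemma cv_const (c : R) : Un_cv (fun _ => c) c.
Proof. intros e he. exists 0%nat. intros n _. unfold R_dist. rewrite Rminus_diag, Rabs_R0. auto. Qed.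

Lemma cv_close (u v w : nat -> R) l : Un_cv u l -> (forall n, Rabs (u n - v n) <= w n) -> Un_cv w 0 -> Un_cv v l.
Proof.
  intros hu hb hw e he.
  destruct (hu (e/2)) as [N1 h1]; [lra|]. destruct (hw (e/2)) as [N2 h2]; [lra|].
  exists (Nat.max N1 N2). intros n hn. specialize (h1 n ltac:(lia)). specialize (h2 n ltac:(lia)).
  specialize (hb n). unfold R_dist in *. rewrite Rminus_0_r in h2.
  pose proof (Rabs_triang (v n - u n) (u n - l)). replace (v n - u n + (u n - l)) with (v n - l) in H by ring.
  rewrite Rabs_minus_sym in hb. pose proof (Rle_abs (w n)). lra.
Qed.

Lemma squeeze0 (u v : nat -> R) : (forall n, 0 <= u n <= v n) -> Un_cv v 0 -> Un_cv u 0.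
Proof.
  intros hb hv. apply (cv_close v u v 0); auto.
  intros n. destruct (hb n). rewrite Rabs_right by lra. lra.
Qed.

Lemma cv_le_const (u : nat -> R) l c : Un_cv u l -> (forall n, u n <= c) -> l <= c.
Proof. intros hu hb. eapply Rle_cv_lim; [exact hb| exact hu| apply cv_const]. Qed.

Lemma cv_ge_const (u : nat -> R) l c : Un_cv u l -> (forall n, c <= u n) -> c <= l.
Proof. intros hu hb. eapply Rle_cv_lim; [exact hb| apply cv_const | exact hu]. Qed.

Section Compl.
Context {Y : SqData} (HY : isSquaMS Y).

Lemma d_diff (a b a' b' : Y) : Rabs (sd Y a b - sd Y a' b') <= sd Y a a' + sd Y b b'.
Proof.
  pose proof (d_tri HY a a' b). pose proof (d_tri HY a' b' b). pose proof (d_tri HY a' a b').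
  pose proof (d_tri HY a b b'). rewrite (d_sym HY b' b) in *. rewrite (d_sym HY a' a) in *.
  unfold Rabs; destruct Rcase_abs; lra.
Qed.

Lemma cclass_self (s : nat -> Y) : Cauchy Y s -> cclass Y s s.
Proof.
  intros h. split; auto. unfold cequiv. eapply Un_cv_ext; [|apply cv_const].
  intros n; simpl. rewrite (d_refl HY). reflexivity.
Qed.

Lemma mem_Cauchy (A : ccar Y) s : proj1_sig A s -> Cauchy Y s.
Proof. destruct A as [A [s0 [h0 ->]]]. simpl. intros [h _]; auto. Qed.

Lemma ccar_mem (A : ccar Y) : exists s, proj1_sig A s.
Proof. destruct A as [A [s0 [h0 ->]]]. exists s0. simpl. apply cclass_self; auto. Qed.

Lemma equiv_tri (s t u : nat -> Y) : cequiv Y s t -> cequiv Y s u -> cequiv Y t u.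
Proof.
  intros h1 h2. unfold cequiv in *.
  apply (squeeze0 _ (fun n => sd Y (s n) (t n) + sd Y (s n) (u n))).
  - intros n. cbv beta. split; [apply (d_nn HY)|]. pose proof (d_tri HY (t n) (s n) (u n)).
    rewrite (d_sym HY (t n) (s n)) in H. lra.
  - replace 0 with (0 + 0) by ring. apply CV_plus; auto.
Qed.

Lemma equiv_sym (s t : nat -> Y) : cequiv Y s t -> cequiv Y t s.
Proof.
  unfold cequiv. intros h. eapply Un_cv_ext; [|exact h]. intros n. simpl. apply (d_sym HY).
Qed.

Lemma mem_equiv (A : ccar Y) s t : proj1_sig A s -> proj1_sig A t -> cequiv Y s t.
Proof.
  destruct A as [A [s0 [h0 ->]]]. simpl. intros [_ h1] [_ h2]. eapply equiv_tri; eauto.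
Qed.

Lemma mem_of_equiv (A : ccar Y) s t : proj1_sig A s -> Cauchy Y t -> cequiv Y s t -> proj1_sig A t.
Proof.
  destruct A as [A [s0 [h0 ->]]]. simpl. intros [_ h1] h2 h3. split; auto.
  eapply equiv_tri; [apply equiv_sym; exact h1| exact h3].
Qed.

Lemma ccar_eq (A B : ccar Y) s : proj1_sig A s -> proj1_sig B s -> A = B.
Proof.
  intros ha hb. apply sig_eq. extensionality t. apply propositional_extensionality. split; intro h.
  - apply (mem_of_equiv B s t hb (mem_Cauchy A t h) (mem_equiv A s t ha h)).
  - apply (mem_of_equiv A s t ha (mem_Cauchy B t h) (mem_equiv B s t hb h)).
Qed.

Lemma dist_cv (s t : nat -> Y) : Cauchy Y s -> Cauchy Y t -> exists l, Un_cv (fun n => sd Y (s n) (t n)) l.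
Proof.
  intros hs ht.
  assert (hc : Cauchy_crit (fun n => sd Y (s n) (t n))).
  { intros e he. destruct (hs (e/2)) as [N1 h1]; [lra|]. destruct (ht (e/2)) as [N2 h2]; [lra|].
    exists (Nat.max N1 N2). intros n m hn hm. unfold R_dist.
    pose proof (d_diff (s n) (t n) (s m) (t m)).
    specialize (h1 n m ltac:(lia) ltac:(lia)). specialize (h2 n m ltac:(lia) ltac:(lia)). lra. }
  destruct (R_complete _ hc) as [l hl]. exists l; auto.
Qed.

Lemma cdist_spec (A B : ccar Y) s t : proj1_sig A s -> proj1_sig B t ->
  Un_cv (fun n => sd Y (s n) (t n)) (cdist A B).
Proof.
  intros hs ht. unfold cdist, Rchoose.
  assert (hex : exists r, exists s t, proj1_sig A s /\ proj1_sig B t /\ Un_cv (fun n => sd Y (s n) (t n)) r).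
  { destruct (dist_cv s t (mem_Cauchy A s hs) (mem_Cauchy B t ht)) as [l hl]. exists l, s, t; auto. }
  pose proof (epsilon_spec (inhabits 0) _ hex) as (s'&t'&hs'&ht'&hl).
  apply (cv_close _ _ (fun n => sd Y (s' n) (s n) + sd Y (t' n) (t n)) _ hl).
  - intros n. apply d_diff.
  - replace 0 with (0 + 0) by ring. apply CV_plus; [apply (mem_equiv A)|apply (mem_equiv B)]; auto.
Qed.

Lemma C_nn (A B : ccar Y) : 0 <= cdist A B.
Proof.
  destruct (ccar_mem A) as [s hs], (ccar_mem B) as [t ht].
  apply (cv_ge_const _ _ 0 (cdist_spec A B s t hs ht)). intros; apply (d_nn HY).
Qed.

Lemma C_le2 (A B : ccar Y) : cdist A B <= 2.
Proof.
  destruct (ccar_mem A) as [s hs], (ccar_mem B) as [t ht].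
  apply (cv_le_const _ _ 2 (cdist_spec A B s t hs ht)). intros; apply (d_le2 HY).
Qed.

Lemma C_sym (A B : ccar Y) : cdist A B = cdist B A.
Proof.
  destruct (ccar_mem A) as [s hs], (ccar_mem B) as [t ht].
  apply (UL_sequence _ _ _ (cdist_spec A B s t hs ht)).
  eapply Un_cv_ext; [|apply (cdist_spec B A t s ht hs)]. intros n; simpl. apply (d_sym HY).
Qed.

Lemma C_tri (A B C : ccar Y) : cdist A C <= cdist A B + cdist B C.
Proof.
  destruct (ccar_mem A) as [s hs], (ccar_mem B) as [t ht], (ccar_mem C) as [u hu].
  eapply Rle_cv_lim; [| apply (cdist_spec A C s u hs hu) | apply (CV_plus _ _ _ _ (cdist_spec A B s t hs ht) (cdist_spec B C t u ht hu))].
  intros n. apply (d_tri HY).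
Qed.

Lemma C_refl (A : ccar Y) : cdist A A = 0.
Proof.
  destruct (ccar_mem A) as [s hs].
  apply (UL_sequence _ _ _ (cdist_spec A A s s hs hs)).
  eapply Un_cv_ext; [|apply cv_const]. intros n; simpl. symmetry; apply (d_refl HY).
Qed.

Lemma C_eq0 (A B : ccar Y) : cdist A B = 0 -> A = B.
Proof.
  intros h. destruct (ccar_mem A) as [s hs], (ccar_mem B) as [t ht].
  pose proof (cdist_spec A B s t hs ht) as hc. rewrite h in hc.
  apply (ccar_eq A B t); auto. apply (mem_of_equiv A s t hs (mem_Cauchy B t ht) hc).
Qed.

Context (H : forall x : Y, sd Y x x = 0).

Definition iota (u : Y) : ccar Y :=
  exist _ (cclass Y (fun _ => u)) (ex_intro _ (fun _ => u) (conj (const_Cauchy Y H u) eq_refl)).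

Lemma iota_mem (u : Y) : proj1_sig (iota u) (fun _ => u).
Proof. simpl. apply cclass_self. apply const_Cauchy; auto. Qed.

Lemma cS_iota (p : M0) : cS Y H p = iota (sS Y p).
Proof. apply sig_eq. reflexivity. Qed.

Lemma cdist_iota (u v : Y) : cdist (iota u) (iota v) = sd Y u v.
Proof.
  apply (UL_sequence _ _ _ (cdist_spec (iota u) (iota v) _ _ (iota_mem u) (iota_mem v))).
  apply cv_const.
Qed.

Lemma cdist_cS (p q : M0) : cdist (cS Y H p) (cS Y H q) = sd Y (sS Y p) (sS Y q).
Proof. rewrite !cS_iota. apply cdist_iota. Qed.

Theorem CD_sq : isSquaMS (CD Y H).
Proof.
  unfold isSquaMS; simpl.
  split; [apply C_nn|].
  split; [intros A B; split; [apply C_eq0| intros ->; apply C_refl]|].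
  split; [apply C_sym|].
  split; [intros; apply C_tri|].
  split; [apply C_le2|].
  split; [intros p q h; apply (S_inj HY); apply (d_eq0 HY); rewrite <- cdist_cS, h; apply C_refl|].
  split; [intros p q h1 h2; rewrite cdist_cS; apply (sq1a HY); auto|].
  split; [intros p q h1 h2; rewrite cdist_cS; apply (sq1b HY); auto|].
  intros p q. rewrite cdist_cS. apply (sq2 HY).
Qed.

End Compl.

Lemma cv_le_ev (u : nat -> R) l c : Un_cv u l -> (exists N, forall n, (N <= n)%nat -> u n <= c) -> l <= c.
Proof.
  intros hu [N hN]. apply (cv_le_const (fun n => u (n + N)%nat) l c).
  - intros e he. destruct (hu e he) as [M hM]. exists M. intros n hn. apply hM. lia.
  - intros n. apply hN. lia.
Qed.

Lemma cv_div3 (u : nat -> R) l : Un_cv u l -> Un_cv (fun n => u n / 3) (l / 3).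
Proof. intros h. unfold Rdiv. apply CV_mult; auto. apply cv_const. Qed.

Section Phi.
Context {sh : shape} {X : SqData} (HX : isSquaMS X).
Local Notation HC := (isSquaMS_refl HX).
Local Notation CX := (CD X (isSquaMS_refl HX)).
Local Notation TX := (TD sh X).

Definition HCX : isSquaMS CX := CD_sq HX HC.
Definition HTX : isSquaMS TX := TD_sq HX.

Definition rep_seq (x : ccar X) : nat -> X :=
  epsilon (inhabits (fun _ => sS X m00)) (fun s => proj1_sig x s).
Lemma rep_seq_mem x : proj1_sig x (rep_seq x).
Proof. unfold rep_seq. apply epsilon_spec. apply (ccar_mem HX). Qed.

Lemma same_cell {Z : SqData} (HZ : isSquaMS Z) (m : Pel sh) (u v : Z) :
  tdist (tcls (m, u)) (tcls (m, v)) <= sd Z u v / 3.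
Proof.
  pose proof (tdist_bd HZ (m, u) (m, v)).
  destruct (bd_case (m, u) (m, v)) as [[_ k]|[k _]]; [simpl in k; lra| simpl in k; congruence].
Qed.

Lemma lift_Cauchy (m : Pel sh) (s : nat -> X) : Cauchy X s -> Cauchy TX (fun k => tcls (m, s k)).
Proof.
  intros hs e he. destruct (hs e he) as [N hN]. exists N. intros n k hn hk. simpl.
  pose proof (same_cell HX m (s n) (s k)). pose proof (hN n k hn hk). pose proof (d_nn HX (s n) (s k)). lra.
Qed.

Definition liftC (m : Pel sh) (x : ccar X) : ccar TX :=
  exist _ (cclass TX (fun k => tcls (m, rep_seq x k)))
    (ex_intro _ _ (conj (lift_Cauchy m _ (mem_Cauchy x _ (rep_seq_mem x))) eq_refl)).

Definition repT (A : tcar sh CX) : TE sh CX :=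
  epsilon (inhabits (pel00 sh, cS X HC m00)) (fun a => proj1_sig A a).

Lemma repT_mem A : proj1_sig A (repT A).
Proof. unfold repT. apply epsilon_spec. destruct (tcar_rep A) as [a ->]. exists a. apply tcls_mem. Qed.

Definition Phi (A : tcar sh CX) : ccar TX := liftC (fst (repT A)) (snd (repT A)).

Lemma cS_mem (q : M0) : proj1_sig (cS X HC q) (fun _ => sS X q).
Proof. rewrite (cS_iota HC). apply (iota_mem HX). Qed.

Lemma liftC_mem (m : Pel sh) (x : ccar X) (t : nat -> tcar sh X) : Cauchy TX t ->
  Un_cv (fun k => tdist (tcls (m, rep_seq x k)) (t k)) 0 -> proj1_sig (liftC m x) t.
Proof.
  intros ht hc. apply (mem_of_equiv HTX (liftC m x) (fun k => tcls (m, rep_seq x k))); auto.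
  simpl. apply (cclass_self HTX). apply lift_Cauchy. apply (mem_Cauchy x). apply rep_seq_mem.
Qed.

Lemma PhiE (m : Pel sh) (x : ccar X) (s : nat -> X) : proj1_sig x s ->
  proj1_sig (Phi (@tcls sh CX (m, x))) (fun k => tcls (m, s k)).
Proof.
  intros hs. unfold Phi. pose proof (repT_mem (@tcls sh CX (m, x))) as ha. simpl in ha.
  set (a := repT (@tcls sh CX (m, x))) in *. clearbody a. destruct a as [ma xa]. simpl.
  apply liftC_mem; [apply lift_Cauchy; apply (mem_Cauchy x); auto|].
  destruct (tsim_inv HCX ha) as [e|(q&q'&h1&h2&h3)].
  - injection e as e1 e2. subst ma xa.
    apply (squeeze0 _ (fun k => sd X (rep_seq x k) (s k) / 3)).
    + intros k. split; [apply (T_nn HX)| apply (same_cell HX)].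
    + replace 0 with (0 / 3) by field. apply cv_div3. apply (mem_equiv HX x); auto. apply rep_seq_mem.
  - simpl in h1, h2, h3. subst x xa.
    apply (squeeze0 _ (fun k => sd X (rep_seq (cS X HC q') k) (sS X q') / 3 + sd X (sS X q) (s k) / 3)).
    + intros k. split; [apply (T_nn HX)|].
      assert (e : tcls (ma, sS X q') = tcls (m, sS X q)).
      { apply tcls_eq. apply W. symmetry; auto. }
      pose proof (T_tri HX (tcls (ma, rep_seq (cS X HC q') k)) (tcls (ma, sS X q')) (tcls (m, s k))).
      pose proof (same_cell HX ma (rep_seq (cS X HC q') k) (sS X q')).
      pose proof (same_cell HX m (sS X q) (s k)). rewrite e in H, H0. lra.
    + replace 0 with (0 / 3 + 0 / 3) by field. apply CV_plus; apply cv_div3.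
      * apply (mem_equiv HX (cS X HC q')); [apply rep_seq_mem|]. apply cS_mem.
      * apply (mem_equiv HX (cS X HC q)); auto. apply cS_mem.
Qed.

End Phi.

Section Iso.
Context {sh : shape} {X : SqData} (HX : isSquaMS X).
Local Notation HC := (isSquaMS_refl HX).
Local Notation CX := (CD X (isSquaMS_refl HX)).
Local Notation TX := (TD sh X).

Definition iE (e : TE sh X) : TE sh CX := (fst e, iota HC (snd e)).
Definition iP (pq : TE sh X * TE sh X) : TE sh CX * TE sh CX := (iE (fst pq), iE (snd pq)).

Lemma iE_tsim (e e' : TE sh X) : tsim e e' -> tsim (iE e) (iE e').
Proof.
  intros h; induction h as [x y Hg| x | x y _ IH | x y z _ IH1 _ IH2].
  - apply rst_step. destruct Hg as (p&q&h1&h2&h3&h4). exists p, q. unfold iE; simpl.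
    rewrite h1, h2, !(cS_iota HC). auto.
  - apply rst_refl.
  - apply rst_sym; auto.
  - eapply rst_trans; eauto.
Qed.

Lemma iE_chain (l : list (TE sh X * TE sh X)) : forall a b, chain_ok a l b -> chain_ok (iE a) (map iP l) (iE b).
Proof.
  induction l as [|[p q] l IH]; simpl; intros a b h.
  - apply iE_tsim; auto.
  - destruct h. split; [apply iE_tsim; auto| apply IH; auto].
Qed.

Lemma iE_bd (p q : TE sh X) : bd (iE p) (iE q) = bd p q.
Proof.
  unfold bd, iE; simpl. destruct (_ && _)%bool; [rewrite (cdist_iota HX)|]; reflexivity.
Qed.

Lemma iE_cost (l : list (TE sh X * TE sh X)) : chain_cost (map iP l) = chain_cost l.
Proof. induction l as [|[p q] l IH]; simpl; [reflexivity|]. rewrite IH. unfold iP; simpl. rewrite iE_bd. reflexivity. Qed.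

Lemma lift_le (m n : Pel sh) (u v : X) :
  tdist (@tcls sh CX (m, iota HC u)) (@tcls sh CX (n, iota HC v)) <= tdist (@tcls sh X (m, u)) (tcls (n, v)).
Proof.
  apply (tdist_lb HX). intros a b l ha hb hc. simpl in ha, hb. rewrite <- iE_cost.
  apply (tdist_le (HCX HX) (a := iE a) (b := iE b)).
  - simpl. apply (iE_tsim (m, u) a ha).
  - simpl. apply (iE_tsim (n, v) b hb).
  - apply iE_chain; auto.
Qed.

Definition rep2 (xi : ccar X) : nat -> X :=
  epsilon (inhabits (fun _ => sS X m00))
    (fun s => proj1_sig xi s /\ forall q, xi = cS X HC q -> s = (fun _ => sS X q)).

Lemma rep2_spec xi : proj1_sig xi (rep2 xi) /\ forall q, xi = cS X HC q -> rep2 xi = (fun _ => sS X q).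
Proof.
  unfold rep2. apply epsilon_spec.
  destruct (classic (exists q, xi = cS X HC q)) as [[q ->]|hn].
  - exists (fun _ => sS X q). split; [apply (cS_mem HX)|]. intros q' e.
    assert (q = q') by (apply (S_inj (HCX HX)); exact e).
    subst; reflexivity.
  - exists (rep_seq xi). split; [apply (rep_seq_mem HX)|]. intros q e. exfalso; apply hn; eauto.
Qed.

Definition pE (k : nat) (e : TE sh CX) : TE sh X := (fst e, rep2 (snd e) k).
Definition pP (k : nat) (pq : TE sh CX * TE sh CX) : TE sh X * TE sh X := (pE k (fst pq), pE k (snd pq)).

Lemma pE_tsim k (e e' : TE sh CX) : tsim e e' -> tsim (pE k e) (pE k e').
Proof.
  intros h; induction h as [x y Hg| x | x y _ IH | x y z _ IH1 _ IH2].
  - apply rst_step. destruct Hg as (p&q&h1&h2&h3&h4). exists p, q. unfold pE; simpl.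
    simpl in h1, h2.
    rewrite (proj2 (rep2_spec _) p h1), (proj2 (rep2_spec _) q h2). auto.
  - apply rst_refl.
  - apply rst_sym; auto.
  - eapply rst_trans; eauto.
Qed.

Lemma pE_chain k (l : list (TE sh CX * TE sh CX)) : forall a b, chain_ok a l b -> chain_ok (pE k a) (map (pP k) l) (pE k b).
Proof.
  induction l as [|[p q] l IH]; simpl; intros a b h.
  - apply pE_tsim; auto.
  - destruct h. split; [apply pE_tsim; auto| apply IH; auto].
Qed.

Lemma pE_bd_cv (p q : TE sh CX) : Un_cv (fun k => bd (pE k p) (pE k q)) (bd p q).
Proof.
  unfold bd, pE; simpl. destruct (_ && _)%bool.
  - apply cv_div3. apply (cdist_spec HX); apply rep2_spec.
  - apply cv_const.
Qed.

Lemma pE_cost_cv (l : list (TE sh CX * TE sh CX)) : Un_cv (fun k => chain_cost (map (pP k) l)) (chain_cost l).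
Proof.
  induction l as [|[p q] l IH]; simpl.
  - apply cv_const.
  - apply CV_plus; auto. apply pE_bd_cv.
Qed.

Lemma Phi_iso (A B : tcar sh CX) : cdist (Phi HX A) (Phi HX B) = tdist A B.
Proof.
  destruct (tcar_rep A) as [[m x] ->], (tcar_rep B) as [[n y] ->].
  set (s := rep_seq x). set (t := rep_seq y).
  pose proof (cdist_spec (HTX HX) _ _ _ _ (PhiE HX m x s (rep_seq_mem HX x)) (PhiE HX n y t (rep_seq_mem HX y))) as hD.
  simpl in hD.
  set (L := cdist (Phi HX (@tcls sh CX (m, x))) (Phi HX (@tcls sh CX (n, y)))) in *.
  apply Rle_antisym.
  - apply (tdist_lb (HCX HX)). intros a' b' l ha hb hc. simpl in ha, hb.
    replace (chain_cost l) with (0 / 3 + chain_cost l + 0 / 3) by field.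
    eapply Rle_cv_lim; [| exact hD | ].
    2: { apply CV_plus; [apply CV_plus|]; [apply cv_div3| apply pE_cost_cv | apply cv_div3].
         - apply (mem_equiv HX x); [apply (rep_seq_mem HX)| apply rep2_spec].
         - apply (mem_equiv HX y); [apply rep2_spec| apply (rep_seq_mem HX)]. }
    intros k. simpl.
    assert (e1 : tcls (m, rep2 x k) = tcls (pE k a')) by (apply tcls_eq; apply (pE_tsim k (m, x) a' ha)).
    assert (e2 : tcls (n, rep2 y k) = tcls (pE k b')) by (apply tcls_eq; apply (pE_tsim k (n, y) b' hb)).
    assert (hcc : tdist (tcls (pE k a')) (tcls (pE k b')) <= chain_cost (map (pP k) l)).
    { apply (tdist_le HX (a := pE k a') (b := pE k b')); [apply tcls_mem| apply tcls_mem| apply pE_chain; auto]. }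
    pose proof (T_tri HX (tcls (m, s k)) (tcls (m, rep2 x k)) (tcls (n, t k))).
    pose proof (T_tri HX (tcls (m, rep2 x k)) (tcls (n, rep2 y k)) (tcls (n, t k))).
    pose proof (same_cell HX m (s k) (rep2 x k)). pose proof (same_cell HX n (rep2 y k) (t k)).
    rewrite e1, e2 in *. unfold s, t in *. lra.
  - apply le_eps. intros e he.
    assert (hs : Cauchy X s) by (apply (mem_Cauchy x); apply (rep_seq_mem HX)).
    assert (ht : Cauchy X t) by (apply (mem_Cauchy y); apply (rep_seq_mem HX)).
    destruct (hs (e/4)) as [N1 h1]; [lra|]. destruct (ht (e/4)) as [N2 h2]; [lra|].
    destruct (hD (e/4)) as [N3 h3]; [lra|].
    set (k := Nat.max N1 (Nat.max N2 N3)).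
    assert (c1 : cdist x (iota HC (s k)) <= e/4).
    { apply (cv_le_ev _ _ _ (cdist_spec HX x (iota HC (s k)) s (fun _ => s k) (rep_seq_mem HX x) (iota_mem HX HC (s k)))).
      exists N1. intros j hj. left. apply h1; lia. }
    assert (c2 : cdist (iota HC (t k)) y <= e/4).
    { apply (cv_le_ev _ _ _ (cdist_spec HX (iota HC (t k)) y (fun _ => t k) t (iota_mem HX HC (t k)) (rep_seq_mem HX y))).
      exists N2. intros j hj. left. apply h2; lia. }
    specialize (h3 k ltac:(lia)). unfold R_dist in h3.
    pose proof (lift_le m n (s k) (t k)).
    pose proof (T_tri (HCX HX) (@tcls sh CX (m, x)) (@tcls sh CX (m, iota HC (s k))) (@tcls sh CX (n, y))).
    pose proof (T_tri (HCX HX) (@tcls sh CX (m, iota HC (s k))) (@tcls sh CX (n, iota HC (t k))) (@tcls sh CX (n, y))).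
    pose proof (same_cell (HCX HX) m x (iota HC (s k))). pose proof (same_cell (HCX HX) n (iota HC (t k)) y).
    simpl in *. unfold L in *. unfold Rabs in h3; destruct Rcase_abs in h3; lra.
Qed.

End Iso.

Section Surj.
Context {sh : shape} {X : SqData} (HX : isSquaMS X).
Local Notation HC := (isSquaMS_refl HX).
Local Notation CX := (CD X (isSquaMS_refl HX)).
Local Notation TX := (TD sh X).
Notation E := (TE sh X).

Lemma far_bd (a b : E) e0 : 0 < e0 -> (forall q, e0 <= sd X (snd a) (sS X q)) ->
  (forall q, e0 <= sd X (snd b) (sS X q)) -> tdist (tcls a) (tcls b) < e0 / 3 ->
  bd a b <= tdist (tcls a) (tcls b).
Proof.
  intros he ha hb hd. apply le_eps. intros h hh.
  set (h' := Rmin h (e0/3 - tdist (tcls a) (tcls b))).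
  assert (hp : 0 < h') by (apply Rmin_glb_lt; lra).
  pose proof (Rmin_l h (e0/3 - tdist (tcls a) (tcls b))). pose proof (Rmin_r h (e0/3 - tdist (tcls a) (tcls b))).
  fold h' in H, H0.
  destruct (tdist_approx HX (tcls a) (tcls b) h' hp) as (a'&b'&l&k1&k2&k3&k4). simpl in k1, k2.
  destruct (tsim_inv HX k1) as [<-|(q&q'&g1&_)].
  2: { exfalso. pose proof (ha q). rewrite g1, (d_refl HX) in H1. lra. }
  destruct (tsim_inv HX k2) as [<-|(q&q'&g1&_)].
  2: { exfalso. pose proof (hb q). rewrite g1, (d_refl HX) in H1. lra. }
  destruct (Lstar HX l a b k3) as [k|(q1&q2&k)]; [lra|].
  pose proof (ha q1). pose proof (hb q2). lra.
Qed.

Definition code (m : Pel sh) : nat := (3 * fst (proj1_sig m) + snd (proj1_sig m))%nat.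

Lemma code_inj (m m' : Pel sh) : code m = code m' -> m = m'.
Proof.
  unfold code. intros h. apply Pel_eq.
  destruct m as [[a b] hm], m' as [[c d] hm']. simpl in *.
  destruct hm as [h1 [h2 _]], hm' as [k1 [k2 _]]. simpl in *. f_equal; lia.
Qed.

Lemma code_le (m : Pel sh) : (code m <= 8)%nat.
Proof. unfold code. destruct m as [[a b] hm]. simpl in *. destruct hm as [h1 [h2 _]]. simpl in *. lia. Qed.

Definition mkC (s : nat -> X) (hs : Cauchy X s) : ccar X :=
  exist _ (cclass X s) (ex_intro _ s (conj hs eq_refl)).

Lemma surj_reduce (Cl : ccar TX) (sig : nat -> tcar sh X) : proj1_sig Cl sig ->
  (exists (m : Pel sh) (x : ccar X) (s : nat -> X), proj1_sig x s /\
     cequiv TX (fun k => tcls (m, s k)) sig) ->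
  exists A, Phi HX A = Cl.
Proof.
  intros hsig (m&x&s&hs&he). exists (@tcls sh CX (m, x)).
  apply (ccar_eq (HTX HX) _ _ sig); auto.
  apply (mem_of_equiv (HTX HX) _ (fun k => tcls (m, s k))); auto.
  - apply (PhiE HX); auto.
  - apply (mem_Cauchy Cl); auto.
Qed.

Lemma Phi_surj (Cl : ccar TX) : exists A, Phi HX A = Cl.
Proof.
  destruct (ccar_mem (HTX HX) Cl) as [sig hsig].
  pose proof (mem_Cauchy Cl sig hsig) as hC.
  apply (surj_reduce Cl sig hsig).
  set (e := fun k => epsilon (inhabits (pel00 sh, sS X m00)) (fun a : E => sig k = tcls a)).
  assert (he : forall k, sig k = tcls (e k)).
  { intros k. unfold e. apply epsilon_spec. apply tcar_rep. }
  clearbody e.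
  destruct (classic (forall ep, 0 < ep -> forall K, exists k, (K <= k)%nat /\ exists q, sd X (snd (e k)) (sS X q) < ep))
    as [Hii|Hi].
  - (* case (ii): approaching the glued set *)
    set (kq := fun j : nat => epsilon (inhabits (0%nat, m00))
             (fun kq : nat * M0 => (j <= fst kq)%nat /\ sd X (snd (e (fst kq))) (sS X (snd kq)) < / (INR j + 1))).
    assert (hkq : forall j, (j <= fst (kq j))%nat /\ sd X (snd (e (fst (kq j)))) (sS X (snd (kq j))) < / (INR j + 1)).
    { intros j. unfold kq. apply epsilon_spec.
      destruct (Hii (/ (INR j + 1)) (inv_pos j) j) as (k&hk&q&hq). exists (k, q). simpl. auto. }
    clearbody kq.
    set (kj := fun j => fst (kq j)). set (qj := fun j => snd (kq j)). set (mj := fun j => fst (e (kj j))).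
    set (G := fun j => @tcls sh X (mj j, sS X (qj j))).
    assert (hG : forall j, tdist (sig (kj j)) (G j) < / (INR j + 1)).
    { intros j. rewrite he. destruct (hkq j) as [_ h2]. unfold G, mj, qj, kj in *.
      pose proof (same_cell HX (fst (e (fst (kq j)))) (snd (e (fst (kq j)))) (sS X (snd (kq j)))).
      rewrite <- surjective_pairing in H. pose proof (d_nn HX (snd (e (fst (kq j)))) (sS X (snd (kq j)))). lra. }
    set (c := fun j => (4 * code (mj j) + side (qj j))%nat).
    assert (hc : forall i j, c i = c j -> mj i = mj j /\ side (qj i) = side (qj j)).
    { intros i j h. unfold c in h. pose proof (side_le (qj i)). pose proof (side_le (qj j)).
      assert (code (mj i) = code (mj j)) by lia. split; [apply code_inj; auto| lia]. }
    destruct (cluster 35 c (fun j => par (qj j)) 0 1) as (v&t&ht&[j0 hj0]&hcl).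
    + intros j. unfold c. pose proof (code_le (mj j)). pose proof (side_le (qj j)). lia.
    + intros j. apply par_bounds.
    + intros ep hep. destruct (small_inv (ep/9)) as [N1 hN1]; [lra|].
      destruct (hC (ep/9)) as [N2 hN2]; [lra|].
      exists (Nat.max N1 N2). intros i j hi hj hij. destruct (hc i j hij) as [em es].
      pose proof (side_par_L1 (qj i) (qj j) es).
      assert (hl : L1 (scl (proj1_sig (mj j)) (proj1_sig (qj i))) (scl (proj1_sig (mj j)) (proj1_sig (qj j)))
                   <= tdist (G i) (G j)).
      { unfold G. rewrite em. apply (LLg HX (mj j, sS X (qj i)) (mj j, sS X (qj j)) (qj i) (qj j) eq_refl eq_refl). }
      rewrite L1_scl in hl.
      pose proof (hG i). pose proof (hG j). pose proof (hN1 i ltac:(lia)). pose proof (hN1 j ltac:(lia)).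
      destruct (hkq i) as [ki _]. destruct (hkq j) as [kj' _].
      pose proof (hN2 (kj i) (kj j) ltac:(unfold kj; lia) ltac:(unfold kj; lia)). simpl in H4.
      pose proof (T_tri HX (G i) (sig (kj i)) (G j)). pose proof (T_tri HX (sig (kj i)) (sig (kj j)) (G j)).
      rewrite (T_sym HX (G i) (sig (kj i))) in H5. lra.
    + assert (hv : (side (qj j0) <= 3)%nat) by apply side_le.
      destruct (side_pt HX (side (qj j0)) t hv ht) as [qs hqs].
      exists (mj j0), (cS X HC qs), (fun _ => sS X qs). split; [apply (cS_mem HX)|].
      intros ep hep.
      destruct (hC (ep/3)) as [N2 hN2]; [lra|]. destruct (small_inv (ep/3)) as [N1 hN1]; [lra|].
      destruct (hcl (ep/3) ltac:(lra) (Nat.max N1 N2)) as (j&hj&hcj&hpj).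
      exists N2. intros k hk. unfold R_dist. rewrite Rminus_0_r. simpl. rewrite Rabs_right by (apply Rle_ge; apply (T_nn HX)).
      destruct (hc j j0 ltac:(congruence)) as [em es].
      pose proof (hqs (qj j) es) as hd.
      pose proof (same_cell HX (mj j0) (sS X qs) (sS X (qj j))).
      rewrite (d_sym HX), hd in H.
      replace (tcls (mj j0, sS X (qj j))) with (G j) in H by (unfold G; rewrite em; reflexivity).
      pose proof (hG j). pose proof (hN1 j ltac:(lia)). destruct (hkq j) as [kk _].
      pose proof (hN2 (kj j) k ltac:(unfold kj; lia) hk). simpl in H2.
      pose proof (T_tri HX (tcls (mj j0, sS X qs)) (G j) (sig k)).
      pose proof (T_tri HX (G j) (sig (kj j)) (sig k)). rewrite (T_sym HX (G j) (sig (kj j))) in H4.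
      rewrite Rabs_minus_sym in H. lra.
  - (* case (i): staying away from the glued set *)
    assert (hfar : exists e0 K0, 0 < e0 /\ forall k, (K0 <= k)%nat -> forall q, e0 <= sd X (snd (e k)) (sS X q)).
    { apply NNPP; intro hn; apply Hi; intros ep hep K; apply NNPP; intro hk; apply hn.
      exists ep, K; split; auto; intros k hk' q; apply Rnot_lt_le; intro hlt; apply hk.
      exists k; split; auto; exists q; auto. }
    destruct hfar as (e0&K0&he0&hfar).
    assert (he02 : e0 <= 2).
    { pose proof (hfar K0 (le_n _) m00). pose proof (d_le2 HX (snd (e K0)) (sS X m00)). lra. }
    destruct (hC (e0/3)) as [N hN]; [lra|]. simpl in hN.
    set (N' := Nat.max N K0).
    assert (hb : forall i j, (N' <= i)%nat -> (N' <= j)%nat ->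
               fst (e i) = fst (e j) /\ sd X (snd (e i)) (snd (e j)) / 3 <= tdist (sig i) (sig j)).
    { intros i j hi hj. pose proof (hN i j ltac:(lia) ltac:(lia)) as H. simpl in H. rewrite !he in H. rewrite !he.
      pose proof (far_bd (e i) (e j) e0 he0 (hfar i ltac:(lia)) (hfar j ltac:(lia)) H).
      destruct (bd_case (e i) (e j)) as [[k1 k2]|[_ k2]]; [split; auto; lra| lra]. }
    set (s := fun k => snd (e (Nat.max k N'))).
    assert (hs : Cauchy X s).
    { intros ep hep. destruct (hC (ep/3)) as [M hM]; [lra|]. exists M. intros i j hi hj. unfold s.
      destruct (hb (Nat.max i N') (Nat.max j N') ltac:(lia) ltac:(lia)) as [_ k].
      pose proof (hM (Nat.max i N') (Nat.max j N') ltac:(lia) ltac:(lia)). simpl in H. lra. }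
    exists (fst (e N')), (mkC s hs), s. split; [simpl; apply (cclass_self HX); auto|].
    intros ep hep. exists N'. intros k hk. unfold R_dist. rewrite Rminus_0_r.
    assert (tcls (fst (e N'), s k) = sig k).
    { unfold s. rewrite (Nat.max_l k N' hk). destruct (hb N' k (le_n _) hk) as [k1 _].
      rewrite k1, <- surjective_pairing, he. reflexivity. }
    simpl. rewrite H, (tdist_refl (d_nn HX)), Rabs_R0. auto.
Qed.

End Surj.

Lemma cS_mem_gen {Y : SqData} (HY : isSquaMS Y) (H : forall x : Y, sd Y x x = 0) (p : M0) :
  proj1_sig (cS Y H p) (fun _ => sS Y p).
Proof. rewrite (cS_iota H). apply (iota_mem HY). Qed.

Section Final.
Context {sh : shape} {X : SqData} (HX : isSquaMS X).
Local Notation HC := (isSquaMS_refl HX).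
Local Notation CX := (CD X (isSquaMS_refl HX)).
Local Notation TX := (TD sh X).
Local Notation HT := (tdist_refl (isSquaMS_nonneg HX)).

Lemma Phi_tS (p : M0) : Phi HX (tS sh CX p) = cS TX HT p.
Proof.
  destruct (@rep_exists sh p) as [[m q] hq]. simpl in hq.
  rewrite (tS_spec p m q hq).
  apply (ccar_eq (HTX HX) _ _ (fun _ => @tcls sh X (m, sS X q))).
  - apply (PhiE HX m (cS X HC q) (fun _ => sS X q)). apply (cS_mem HX).
  - rewrite <- (tS_spec p m q hq). apply (cS_mem_gen (HTX HX)).
Qed.

Lemma Phi_inj (A B : tcar sh CX) : Phi HX A = Phi HX B -> A = B.
Proof.
  intros h. apply (T_eq0 (HCX HX)). rewrite <- (Phi_iso HX), h. apply (C_refl (HTX HX)).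
Qed.

Lemma Phi_iso_full : sq_iso (TD sh CX) (CD TX HT) (Phi HX).
Proof.
  unfold sq_iso.
  split; [exact (TD_sq (HCX HX))|].
  split; [exact (CD_sq (HTX HX) HT)|].
  split.
  { split.
    - intros a b. simpl. rewrite (Phi_iso HX). lra.
    - intros p. simpl. apply Phi_tS. }
  set (g := fun C : ccar TX => epsilon (inhabits (tS sh CX m00)) (fun A => Phi HX A = C)).
  assert (hg : forall C, Phi HX (g C) = C).
  { intros C. unfold g. apply epsilon_spec. apply (Phi_surj HX). }
  exists g. split; [split|split].
  - intros a b. simpl. rewrite <- (Phi_iso HX), !hg. lra.
  - intros p. simpl. apply Phi_inj. rewrite hg. symmetry. apply Phi_tS.
  - intros x. apply Phi_inj. rewrite hg. reflexivity.
  - intros y. apply hg.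
Qed.

End Final.

Section Nat.
Context {sh : shape} {X Y : SqData} (HX : isSquaMS X) (HY : isSquaMS Y) (f : X -> Y) (hf : morph X Y f).

Definition fE (e : TE sh X) : TE sh Y := (fst e, f (snd e)).
Definition fP (pq : TE sh X * TE sh X) : TE sh Y * TE sh Y := (fE (fst pq), fE (snd pq)).

Lemma fE_tsim (e e' : TE sh X) : tsim e e' -> tsim (fE e) (fE e').
Proof.
  intros h; induction h as [x y Hg| x | x y _ IH | x y z _ IH1 _ IH2].
  - apply rst_step. destruct Hg as (p&q&h1&h2&h3&h4). exists p, q. unfold fE; simpl.
    rewrite h1, h2, !(proj2 hf). auto.
  - apply rst_refl.
  - apply rst_sym; auto.
  - eapply rst_trans; eauto.
Qed.

Lemma fE_chain (l : list (TE sh X * TE sh X)) : forall a b, chain_ok a l b -> chain_ok (fE a) (map fP l) (fE b).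
Proof.
  induction l as [|[p q] l IH]; simpl; intros a b h.
  - apply fE_tsim; auto.
  - destruct h. split; [apply fE_tsim; auto| apply IH; auto].
Qed.

Lemma fE_cost (l : list (TE sh X * TE sh X)) : chain_cost (map fP l) <= chain_cost l.
Proof.
  induction l as [|[p q] l IH]; simpl; [lra|].
  assert (bd (fE p) (fE q) <= bd p q).
  { destruct (bd_case p q) as [[e1 k1]|[n1 k1]]; destruct (bd_case (fE p) (fE q)) as [[e2 k2]|[n2 k2]];
    rewrite k1, k2; unfold fE in *; simpl in *; try lra; try congruence.
    pose proof (proj1 hf (snd p) (snd q)). lra. }
  unfold fE in *. simpl in *. lra.
Qed.

Lemma tensmap_cls (a : TE sh X) : tensmap sh X Y f (tcls a) = tcls (fE a).
Proof.
  unfold tensmap.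
  match goal with |- context [epsilon ?i ?P] =>
    pose proof (epsilon_spec i P (ex_intro _ a (tcls_mem a))) as Hs; set (a' := epsilon i P) in * end.
  cbv beta in Hs. simpl in Hs. symmetry. apply tcls_eq. apply (fE_tsim a a' Hs).
Qed.

Lemma tensmap_short (A B : tcar sh X) :
  tdist (tensmap sh X Y f A) (tensmap sh X Y f B) <= tdist A B.
Proof.
  destruct (tcar_rep A) as [a ->], (tcar_rep B) as [b ->]. rewrite !tensmap_cls.
  apply (tdist_lb HX). intros a' b' l ha hb hc. simpl in ha, hb.
  eapply Rle_trans; [|apply fE_cost].
  apply (tdist_le HY (a := fE a') (b := fE b')).
  - simpl. apply fE_tsim; auto.
  - simpl. apply fE_tsim; auto.
  - apply fE_chain; auto.
Qed.

Lemma naturality (m : Pel sh) (x : ccar X) (y : ccar Y) : Crel X Y f x y ->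
  Crel (TD sh X) (TD sh Y) (tensmap sh X Y f)
       (Phi HX (@tcls sh (CD X (isSquaMS_refl HX)) (m, x)))
       (Phi HY (@tcls sh (CD Y (isSquaMS_refl HY)) (m, y))).
Proof.
  intros hxy sig hsig.
  set (s := rep_seq x). assert (hs : proj1_sig x s) by apply (rep_seq_mem HX).
  pose proof (hxy s hs) as hfs.
  pose proof (PhiE HX m x s hs) as h1.
  pose proof (PhiE HY m y _ hfs) as h2.
  apply (mem_of_equiv (HTX HY) _ _ _ h2).
  - pose proof (mem_Cauchy _ _ hsig) as hC. intros e he. destruct (hC e he) as [N hN].
    exists N. intros n k hn hk. simpl. pose proof (tensmap_short (sig n) (sig k)).
    specialize (hN n k hn hk). simpl in hN. lra.
  - pose proof (mem_equiv (HTX HX) _ _ _ h1 hsig) as he.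
    eapply squeeze0; [|exact he]. intros k. simpl. split; [apply (T_nn HY)|].
    replace (tcls (m, f (s k))) with (tensmap sh X Y f (tcls (m, s k))) by (rewrite tensmap_cls; reflexivity).
    apply tensmap_short.
Qed.

End Nat.

Theorem mainTheorem16 (sh : shape) :
  exists Phi : forall (X : SqData) (HX : isSquaMS X),
      tcar sh (CD X (isSquaMS_refl HX)) -> ccar (TD sh X),
    (forall (X : SqData) (HX : isSquaMS X),
       sq_iso (TD sh (CD X (isSquaMS_refl HX)))
              (CD (TD sh X) (tdist_refl (isSquaMS_nonneg HX)))
              (Phi X HX)
       /\ (forall (m : Pel sh) (x : ccar X) (s : nat -> X),
             proj1_sig x s ->
             proj1_sig (Phi X HX (@tcls sh (CD X (isSquaMS_refl HX)) (m, x)))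
                       (fun k => @tcls sh X (m, s k))))
    /\ (forall (X Y : SqData) (HX : isSquaMS X) (HY : isSquaMS Y) (f : X -> Y),
          morph X Y f ->
          forall (m : Pel sh) (x : ccar X) (y : ccar Y),
            Crel X Y f x y ->
            Crel (TD sh X) (TD sh Y) (tensmap sh X Y f)
                 (Phi X HX (@tcls sh (CD X (isSquaMS_refl HX)) (m, x)))
                 (Phi Y HY (@tcls sh (CD Y (isSquaMS_refl HY)) (m, y)))).
Proof.
  exists (fun X HX => @Phi sh X HX). split.
  - intros X HX. split.
    + apply Phi_iso_full.
    + intros m x s hs. apply (PhiE HX). auto.
  - intros X Y HX HY f hf m x y hxy. apply (naturality HX HY f hf). auto.
Qed.
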